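(* Fix $\gamma \in (\tfrac{2}{3},2)$. Assume $x \in B_1^+(\mathrm{VI}_0)$ has an $\alpha$-limit point $y \in \mathscr{K}_2 \cup \mathscr{K}_3$. Then the image $K(y)$ of $y$ under the Kasner map is also contained in $\alpha(x)$.
   Context: Set $q^* := \tfrac{3\gamma-2}{2} \in (0,2)$. On $\mathbb{R}^5$ with coordinates $(\Sigma_+,\Sigma_-,N_+,N_-,\Omega)$ consider the system (with $' = d/d\tau$) $\Sigma_+' = -(2-q)\Sigma_+ - 2N_-^2$, $\Sigma_-' = -(2-q)\Sigma_- - 2\sqrt{3}N_+N_-$, $N_+' = (q+2\Sigma_+)N_+ + 2\sqrt{3}\Sigma_- N_-$, $N_-' = (q+2\Sigma_+)N_- + 2\sqrt{3}\Sigma_- N_+$, $\Omega' = 2(q-q^* )\Omega$, where $q := 2(\Sigma_+^2+\Sigma_-^2) + q^*\Omega$. The phase space $B_1^+(\mathrm{VI}_0)$ is the set of points satisfying $\Omega + \Sigma_+^2 + \Sigma_-^2 + N_-^2 = 1$, $\Omega \ge 0$ and $N_- > |N_+|$; it is invariant, solutions exist for all $\tau$, and $\varphi^\tau(x)$ denotes the flow. The $\alpha$-limit set $\alpha(x)$ is the set of all limits of $\varphi^{\tau_k}(x)$ with $\tau_k \to -\infty$. The Kasner circle is $\mathscr{K} := \{\Sigma_+^2+\Sigma_-^2 = 1,\ N_+=N_-=0,\ \Omega=0\}$ (a circle of equilibria). The Taub points are the points of $\mathscr{K}$ with $(\Sigma_+,\Sigma_-) = (-1,0)$ ($T_1$),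 $(\tfrac12,\tfrac{\sqrt3}{2})$ ($T_2$), $(\tfrac12,-\tfrac{\sqrt3}{2})$ ($T_3$). They split $\mathscr{K}$ into three open arcs: $\mathscr{K}_1$ is the arc with endpoints $T_2,T_3$ not containing $T_1$, $\mathscr{K}_2$ the arc with endpoints $T_1,T_3$ not containing $T_2$, and $\mathscr{K}_3$ the arc with endpoints $T_1,T_2$ not containing $T_3$. The Kasner map $K:\mathscr{K}\to\mathscr{K}$ sends $x \in \mathscr{K}$ to the $\alpha$-limit point of the vacuum Bianchi type II orbit having $x$ as its $\omega$-limit point; concretely, $K(T_j)=T_j$, and for $x \in \mathscr{K}_j$ the point $K(x)$ is the second intersection point of $\mathscr{K}$ (in the $(\Sigma_+,\Sigma_-)$-plane) with the straight line through $x$ and $C_j$, where $C_1 = (2,0)$, $C_2 = (-1,-\sqrt3)$, $C_3 = (-1,\sqrt3)$. *)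

(* Defs.v *)
From Stdlib Require Import Reals Lra.
Open Scope R_scope.

(* A point of R^5 with coordinates (Sigma_+, Sigma_-, N_+, N_-, Omega). *)
Record state := mkState { Sp : R; Sm : R; Np : R; Nm : R; Om : R }.

Definition qstar (gamma : R) : R := (3 * gamma - 2) / 2.

Definition qfun (gamma : R) (x : state) : R :=
  2 * (Sp x ^ 2 + Sm x ^ 2) + qstar gamma * Om x.

Definition is_solution (gamma : R) (phi : R -> state) : Prop :=
  forall t : R,
    let x := phi t in
    let q := qfun gamma x in
    derivable_pt_lim (fun s => Sp (phi s)) t
      (- (2 - q) * Sp x - 2 * Nm x ^ 2) /\
    derivable_pt_lim (fun s => Sm (phi s)) t
      (- (2 - q) * Sm x - 2 * sqrt 3 * Np x * Nm x) /\
    derivable_pt_lim (fun s => Np (phi s)) t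
      ((q + 2 * Sp x) * Np x + 2 * sqrt 3 * Sm x * Nm x) /\
    derivable_pt_lim (fun s => Nm (phi s)) t
      ((q + 2 * Sp x) * Nm x + 2 * sqrt 3 * Sm x * Np x) /\
    derivable_pt_lim (fun s => Om (phi s)) t
      (2 * (q - qstar gamma) * Om x).

Definition in_B1plus (x : state) : Prop :=
  Om x + Sp x ^ 2 + Sm x ^ 2 + Nm x ^ 2 = 1 /\ 0 <= Om x /\ Nm x > Rabs (Np x).

Definition alpha_limit_point (phi : R -> state) (y : state) : Prop :=
  exists tau : nat -> R,
    (forall M : R, exists N : nat, forall k : nat, (k >= N)%nat -> tau k < M) /\
    Un_cv (fun k => Sp (phi (tau k))) (Sp y) /\
    Un_cv (fun k => Sm (phi (tau k))) (Sm y) /\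
    Un_cv (fun k => Np (phi (tau k))) (Np y) /\
    Un_cv (fun k => Nm (phi (tau k))) (Nm y) /\
    Un_cv (fun k => Om (phi (tau k))) (Om y).

(* Points of the (Sigma_+, Sigma_-)-plane. *)
Definition pt := (R * R)%type.

Definition on_circle (p : pt) : Prop := fst p ^ 2 + snd p ^ 2 = 1.

Definition kasner_state (p : pt) : state := mkState (fst p) (snd p) 0 0 0.

Definition T1 : pt := (-1, 0).
Definition T2 : pt := (1/2, sqrt 3 / 2).
Definition T3 : pt := (1/2, - (sqrt 3 / 2)).
Definition C1 : pt := (2, 0).
Definition C2 : pt := (-1, - sqrt 3).
Definition C3 : pt := (-1, sqrt 3).

Definition side (a b p : pt) : R :=
  (fst b - fst a) * (snd p - snd a) - (snd b - snd a) * (fst p - fst a).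

(* The open arc of the unit circle with endpoints a, b not containing c
   (the connected component of circle \ {a,b} not containing c): these are
   the circle points strictly on the other side of the chord ab than c. *)
Definition in_open_arc (a b c p : pt) : Prop :=
  on_circle p /\ side a b p * side a b c < 0.

Definition K1arc (p : pt) : Prop := in_open_arc T2 T3 T1 p.
Definition K2arc (p : pt) : Prop := in_open_arc T1 T3 T2 p.
Definition K3arc (p : pt) : Prop := in_open_arc T1 T2 T3 p.

Definition on_line (p c z : pt) : Prop := side p c z = 0.

Definition kasner_map_rel (p z : pt) : Prop :=
  (p = T1 /\ z = T1) \/ (p = T2 /\ z = T2) \/ (p = T3 /\ z = T3) \/
  (K1arc p /\ on_circle z /\ on_line p C1 z /\ z <> p) \/
  (K2arc p /\ on_circle z /\ on_line p C2 z /\ z <> p) \/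
  (K3arc p /\ on_circle z /\ on_line p C3 z /\ z <> p).

(* Main.v *)
Require Import Defs.
From Stdlib Require Import Reals.
Open Scope R_scope.
From Stdlib Require Import Lra Psatz IndefiniteDescription.
From Coquelicot Require Import Coquelicot.
Open Scope R_scope.


Lemma cont_sign_nbhd (f : R -> R) (c : R) :
  continuity_pt f c -> f c <> 0 ->
  exists d, d > 0 /\ forall t, Rabs (t - c) < d -> f t * f c > 0.
Proof.
  intros H Hc.
  assert (He : Rabs (f c) / 2 > 0) by (apply Rabs_pos_lt in Hc; lra).
  destruct (H _ He) as [d [Hd Hd2]].
  exists d; split; [lra|]. intros t Ht.
  destruct (Req_dec t c) as [->|Hne].
  - nra.
  - assert (Hr : Rabs (f t - f c) < Rabs (f c) / 2).
    { apply (Hd2 t). split; [split; [exact I| auto] | exact Ht]. }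
    destruct (Rle_or_lt 0 (f c)) as [Hp|Hn].
    + apply Rabs_def2 in Hr. rewrite (Rabs_right (f c)) in Hr; [nra|lra].
    + apply Rabs_def2 in Hr. rewrite (Rabs_left (f c)) in Hr; [nra|lra].
Qed.

Lemma first_hit (f : R -> R) (a b : R) :
  (forall t, continuity_pt f t) -> a < b -> f a < 0 -> 0 <= f b ->
  exists c, a < c <= b /\ f c = 0 /\ forall t, a <= t < c -> f t < 0.
Proof.
  intros Hc Hab Ha Hb.
  set (E := fun x => a <= x <= b /\ forall t, a <= t <= x -> f t < 0).
  assert (HB : bound E) by (exists b; intros x [Hx _]; lra).
  assert (HE : exists x, E x) by (exists a; split; [lra| intros t Ht; replace t with a by lra; auto]).
  destruct (completeness E HB HE) as [c [Hub Hlub]].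
  assert (Hac : a <= c) by (apply Hub; destruct HE; unfold E; split; [lra| intros t Ht; replace t with a by lra; auto]).
  assert (Hcb : c <= b) by (apply Hlub; intros x [Hx _]; lra).
  assert (Hbelow : forall t, a <= t < c -> f t < 0).
  { intros t Ht.
    destruct (Rle_or_lt c t) as [Hct|Htc]; [lra|].
    destruct (Classical_Prop.classic (exists x, E x /\ t <= x)) as [[x [[Hx1 Hx2] Htx]]|Hno].
    - apply Hx2; lra.
    - exfalso. assert (c <= t); [|lra].
      apply Hlub. intros x Ex. destruct (Rle_or_lt x t); auto.
      exfalso; apply Hno; exists x; split; auto; lra. }
  destruct (Rtotal_order (f c) 0) as [Hn|[Hz|Hp]].
  - exfalso.
    destruct (cont_sign_nbhd f c (Hc c) ltac:(lra)) as [d [Hd Hd2]].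
    destruct (Req_dec c b) as [->|Hcb'].
    + lra.
    + set (x := Rmin b (c + d/2)).
      assert (Ex : E x).
      { split. unfold x; split; [apply Rmin_case; lra| apply Rmin_l].
        intros t Ht. destruct (Rlt_or_le t c). apply Hbelow; lra.
        assert (Hx : x <= c + d/2) by apply Rmin_r.
        assert (f t * f c > 0) by (apply Hd2; apply Rabs_def1; lra). nra. }
      assert (x <= c) by (apply Hub; auto).
      unfold x in H. revert H. apply Rmin_case; lra.
  - exists c. split; [|split; auto].
    split; auto. destruct (Req_dec a c) as [<-|]; [lra|lra].
  - exfalso.
    destruct (cont_sign_nbhd f c (Hc c) ltac:(lra)) as [d [Hd Hd2]].
    destruct (Req_dec a c) as [<-|Hac'].
    + lra.
    + assert (c <= Rmax a (c - d/2)).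
      { apply Hlub. intros x [Hx1 Hx2].
        destruct (Rle_or_lt x (Rmax a (c - d/2))); auto.
        exfalso.
        assert (Hm : c - d/2 <= Rmax a (c - d/2)) by apply Rmax_r.
        assert (Hxc : x <= c) by (apply Hub; split; auto).
        assert (f x < 0) by (apply Hx2; lra).
        assert (f x * f c > 0) by (apply Hd2; apply Rabs_def1; lra). nra. }
      revert H. apply Rmax_case; lra.
Qed.

Lemma deriv_nonpos (f f' : R -> R) (a b : R) :
  a <= b ->
  (forall t, a <= t <= b -> derivable_pt_lim f t (f' t)) ->
  (forall t, a <= t <= b -> f' t <= 0) -> f b <= f a.
Proof.
  intros Hab Hd Hs. destruct (Req_dec a b) as [->|Hne]; [lra|].
  destruct (MVT_cor2 f f' a b ltac:(lra) Hd) as [c [Hc1 Hc2]].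
  assert (f' c <= 0) by (apply Hs; lra). nra.
Qed.

Lemma deriv_nonneg (f f' : R -> R) (a b : R) :
  a <= b ->
  (forall t, a <= t <= b -> derivable_pt_lim f t (f' t)) ->
  (forall t, a <= t <= b -> 0 <= f' t) -> f a <= f b.
Proof.
  intros Hab Hd Hs. destruct (Req_dec a b) as [->|Hne]; [lra|].
  destruct (MVT_cor2 f f' a b ltac:(lra) Hd) as [c [Hc1 Hc2]].
  assert (0 <= f' c) by (apply Hs; lra). nra.
Qed.

Lemma dmult (f g : R -> R) x lf lg :
  derivable_pt_lim f x lf -> derivable_pt_lim g x lg ->
  derivable_pt_lim (fun s => f s * g s) x (lf * g x + f x * lg).
Proof. intros. apply (derivable_pt_lim_mult f g x lf lg); auto. Qed.

Lemma dplus (f g : R -> R) x lf lg :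
  derivable_pt_lim f x lf -> derivable_pt_lim g x lg ->
  derivable_pt_lim (fun s => f s + g s) x (lf + lg).
Proof. intros. apply (derivable_pt_lim_plus f g x lf lg); auto. Qed.

Lemma dminus (f g : R -> R) x lf lg :
  derivable_pt_lim f x lf -> derivable_pt_lim g x lg ->
  derivable_pt_lim (fun s => f s - g s) x (lf - lg).
Proof. intros. apply (derivable_pt_lim_minus f g x lf lg); auto. Qed.

Lemma dconst (c x : R) : derivable_pt_lim (fun _ => c) x 0.
Proof. apply derivable_pt_lim_const. Qed.

Lemma did (x : R) : derivable_pt_lim (fun s => s) x 1.
Proof. apply derivable_pt_lim_id. Qed.

Lemma dexpc (f : R -> R) x lf :
  derivable_pt_lim f x lf ->
  derivable_pt_lim (fun s => exp (f s)) x (exp (f x) * lf).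
Proof.
  intros H. assert (H2 := derivable_pt_lim_comp f exp x lf _ H (derivable_pt_lim_exp _)).
  exact H2.
Qed.

Lemma ddiv (f g : R -> R) x lf lg :
  g x <> 0 -> derivable_pt_lim f x lf -> derivable_pt_lim g x lg ->
  derivable_pt_lim (fun s => f s / g s) x ((lf * g x - lg * f x) / (g x)^2).
Proof.
  intros Hn H1 H2.
  assert (H := derivable_pt_lim_div f g x lf lg H1 H2 Hn).
  replace ((g x)^2) with (Rsqr (g x)) by (unfold Rsqr; ring).
  exact H.
Qed.

Lemma deriv_ext (f g : R -> R) x l :
  (forall s, f s = g s) -> derivable_pt_lim f x l -> derivable_pt_lim g x l.
Proof.
  intros He H. replace g with f; auto. apply FunctionalExtensionality.functional_extensionality; auto.
Qed.

Lemma deriv_eqv (f : R -> R) x l l' : l = l' -> derivable_pt_lim f x l -> derivable_pt_lim f x l'.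
Proof. intros ->; auto. Qed.

Lemma deriv_cont (f : R -> R) x l : derivable_pt_lim f x l -> continuity_pt f x.
Proof. intros H. apply derivable_continuous_pt. exists l. exact H. Qed.

Lemma cplus (f g : R -> R) x : continuity_pt f x -> continuity_pt g x -> continuity_pt (fun s => f s + g s) x.
Proof. intros. apply (continuity_pt_plus f g); auto. Qed.
Lemma cmult (f g : R -> R) x : continuity_pt f x -> continuity_pt g x -> continuity_pt (fun s => f s * g s) x.
Proof. intros. apply (continuity_pt_mult f g); auto. Qed.
Lemma cminus (f g : R -> R) x : continuity_pt f x -> continuity_pt g x -> continuity_pt (fun s => f s - g s) x.
Proof. intros. apply (continuity_pt_minus f g); auto. Qed.
Lemma cconst (c x : R) : continuity_pt (fun _ => c) x.
Proof. apply continuity_pt_const. intros a b; auto. Qed.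

Lemma exp_growth (f fd : R -> R) c a b :
  a <= b -> (forall t, a <= t <= b -> derivable_pt_lim f t (fd t)) ->
  (forall t, a <= t <= b -> fd t <= c * f t) -> f b <= f a * exp (c * (b - a)).
Proof.
  intros Hab Hd Hs.
  set (h := fun t => f t * exp (- c * t)).
  assert (Hh : h b <= h a).
  { apply (deriv_nonpos h (fun t => (fd t - c * f t) * exp (- c * t))); auto.
    - intros t Ht. unfold h. eapply deriv_eqv; [|apply (dmult f (fun t => exp (- c * t))); [auto|]; apply (dexpc (fun t => - c * t));
      apply (dmult (fun _ => - c) (fun t => t)); [apply dconst|apply did]]. ring.
    - intros t Ht. assert (H1 := Hs t Ht). assert (H2 := exp_pos (- c * t)). nra. }
  unfold h in Hh.
  assert (E : f a * exp (c * (b - a)) = f a * exp (- c * a) * exp (c * b)).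
  { rewrite Rmult_assoc, <- exp_plus. f_equal. f_equal. ring. }
  rewrite E.
  assert (E2 : f b = f b * exp (- c * b) * exp (c * b)).
  { rewrite Rmult_assoc, <- exp_plus. replace (- c * b + c * b) with 0 by ring. rewrite exp_0; ring. }
  rewrite E2. apply Rmult_le_compat_r; [apply Rlt_le, exp_pos|exact Hh].
Qed.

Lemma exp_growth_ge (f fd : R -> R) c a b :
  a <= b -> (forall t, a <= t <= b -> derivable_pt_lim f t (fd t)) ->
  (forall t, a <= t <= b -> c * f t <= fd t) -> f a * exp (c * (b - a)) <= f b.
Proof.
  intros Hab Hd Hs.
  assert (H := exp_growth (fun t => - f t) (fun t => - fd t) c a b Hab).
  assert (H' : - f b <= - f a * exp (c * (b - a))).
  { apply H. intros t Ht. apply (derivable_pt_lim_opp f). auto.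
    intros t Ht. assert (H1 := Hs t Ht). lra. }
  lra.
Qed.

Definition mx (a b : R) := (a + b + Rabs (a - b)) / 2.

Lemma mx_props a b : a <= mx a b /\ b <= mx a b /\ (mx a b = a \/ mx a b = b).
Proof.
  unfold mx. destruct (Rle_or_lt 0 (a - b)); [rewrite Rabs_right|rewrite Rabs_left]; lra.
Qed.

Lemma cmx (f g : R -> R) x : continuity_pt f x -> continuity_pt g x ->
  continuity_pt (fun s => mx (f s) (g s)) x.
Proof.
  intros Hf Hg. unfold mx.
  apply (cmult (fun s => f s + g s + Rabs (f s - g s)) (fun _ => / 2)); [|apply cconst].
  apply (cplus (fun s => f s + g s)); [apply cplus; auto|].
  apply (continuity_pt_comp (fun s => f s - g s) Rabs). apply cminus; auto.
  apply Rcontinuity_abs.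
Qed.

Lemma cabs (f : R -> R) x : continuity_pt f x -> continuity_pt (fun s => Rabs (f s)) x.
Proof. intros H. apply (continuity_pt_comp f Rabs); auto. apply Rcontinuity_abs. Qed.


Lemma antider (a : R -> R) :
  (forall t, continuity_pt a t) ->
  forall t, derivable_pt_lim (fun s => RInt a 0 s) t (a t).
Proof.
  intros Hc t. apply is_derive_Reals.
  apply (is_derive_RInt a (fun s => RInt a 0 s) 0 t).
  - apply filter_forall. intros b. apply (@RInt_correct R_CompleteNormedModule).
    apply (@ex_RInt_continuous R_CompleteNormedModule). intros z _. apply continuity_pt_filterlim. apply Hc.
  - apply continuity_pt_filterlim. apply Hc.
Qed.

Lemma lin_ode (f a : R -> R) :
  (forall t, derivable_pt_lim f t (a t * f t)) ->
  (forall t, continuity_pt a t) ->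
  forall t, f t = f 0 * exp (RInt a 0 t).
Proof.
  intros Hf Hc.
  set (h := fun s => f s * exp (- RInt a 0 s)).
  assert (Hh : forall t, derivable_pt_lim h t 0).
  { intros t. unfold h.
    apply (deriv_eqv _ _ ((a t * f t) * exp (- RInt a 0 t) + f t * (exp (- RInt a 0 t) * (- a t)))); [ring|].
    apply (dmult f (fun s => exp (- RInt a 0 s))); [apply Hf|].
    apply (dexpc (fun s => - RInt a 0 s)). apply (derivable_pt_lim_opp (fun s => RInt a 0 s)). apply antider; auto. }
  assert (H0 : h 0 = f 0).
  { unfold h. rewrite RInt_point. simpl.
    assert (Hz : @zero (CompleteNormedModule.AbelianMonoid R_AbsRing R_CompleteNormedModule) = 0) by reflexivity. rewrite Hz, Ropp_0, exp_0; ring. }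
  assert (Hconst : forall t, h t = h 0).
  { intros t. destruct (Rle_or_lt 0 t).
    - apply Rle_antisym.
      + apply (deriv_nonpos h (fun _ => 0)); intros; auto; lra.
      + apply (deriv_nonneg h (fun _ => 0)); intros; auto; lra.
    - apply Rle_antisym.
      + apply (deriv_nonneg h (fun _ => 0)); intros; auto; lra.
      + apply (deriv_nonpos h (fun _ => 0)); intros; auto; lra. }
  intros t. specialize (Hconst t). rewrite H0 in Hconst. unfold h in Hconst.
  rewrite <- Hconst. rewrite Rmult_assoc, <- exp_plus.
  replace (- RInt a 0 t + RInt a 0 t) with 0 by ring. rewrite exp_0; ring.
Qed.


Section Inv.
Variable gamma : R.
Variable phi : R -> state.
Hypothesis Hsol : is_solution gamma phi.

Definition qt (t : R) := qfun gamma (phi t).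

Lemma dSp t : derivable_pt_lim (fun s => Sp (phi s)) t
  (- (2 - qt t) * Sp (phi t) - 2 * Nm (phi t) ^ 2).
Proof. apply (Hsol t). Qed.
Lemma dSm t : derivable_pt_lim (fun s => Sm (phi s)) t
  (- (2 - qt t) * Sm (phi t) - 2 * sqrt 3 * Np (phi t) * Nm (phi t)).
Proof. apply (Hsol t). Qed.
Lemma dNp t : derivable_pt_lim (fun s => Np (phi s)) t
  ((qt t + 2 * Sp (phi t)) * Np (phi t) + 2 * sqrt 3 * Sm (phi t) * Nm (phi t)).
Proof. apply (Hsol t). Qed.
Lemma dNm t : derivable_pt_lim (fun s => Nm (phi s)) t
  ((qt t + 2 * Sp (phi t)) * Nm (phi t) + 2 * sqrt 3 * Sm (phi t) * Np (phi t)).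
Proof. apply (Hsol t). Qed.
Lemma dOm t : derivable_pt_lim (fun s => Om (phi s)) t
  (2 * (qt t - qstar gamma) * Om (phi t)).
Proof. apply (Hsol t). Qed.

Lemma cSp t : continuity_pt (fun s => Sp (phi s)) t.
Proof. exact (deriv_cont _ _ _ (dSp t)). Qed.
Lemma cSm t : continuity_pt (fun s => Sm (phi s)) t.
Proof. exact (deriv_cont _ _ _ (dSm t)). Qed.
Lemma cNp t : continuity_pt (fun s => Np (phi s)) t.
Proof. exact (deriv_cont _ _ _ (dNp t)). Qed.
Lemma cNm t : continuity_pt (fun s => Nm (phi s)) t.
Proof. exact (deriv_cont _ _ _ (dNm t)). Qed.
Lemma cOm t : continuity_pt (fun s => Om (phi s)) t.
Proof. exact (deriv_cont _ _ _ (dOm t)). Qed.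

Lemma cqt t : continuity_pt qt t.
Proof.
  unfold qt, qfun.
  apply (cplus (fun s => 2 * (Sp (phi s) ^ 2 + Sm (phi s) ^ 2)) (fun s => qstar gamma * Om (phi s))).
  - apply (cmult (fun _ => 2)); [apply cconst|].
    apply (cplus (fun s => Sp (phi s) ^ 2)); simpl.
    + apply (cmult (fun s => Sp (phi s))); [apply cSp|apply (cmult (fun s => Sp (phi s))); [apply cSp|apply cconst]].
    + apply (cmult (fun s => Sm (phi s))); [apply cSm|apply (cmult (fun s => Sm (phi s))); [apply cSm|apply cconst]].
  - apply (cmult (fun _ => qstar gamma)); [apply cconst|apply cOm].
Qed.

Lemma lin_sign (f a : R -> R) :
  (forall t, derivable_pt_lim f t (a t * f t)) ->
  (forall t, continuity_pt a t) ->
  forall t, (f 0 > 0 -> f t > 0) /\ (f 0 = 0 -> f t = 0) /\ (f 0 >= 0 -> f t >= 0).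
Proof.
  intros Hf Ha t. rewrite (lin_ode f a Hf Ha t).
  assert (H := exp_pos (RInt a 0 t)). repeat split; intros; nra.
Qed.

Hypothesis H0 : in_B1plus (phi 0).

Lemma constraint_all t :
  Om (phi t) + Sp (phi t) ^ 2 + Sm (phi t) ^ 2 + Nm (phi t) ^ 2 = 1.
Proof.
  set (G := fun s => Om (phi s) + Sp (phi s) ^ 2 + Sm (phi s) ^ 2 + Nm (phi s) ^ 2 - 1).
  assert (HG : forall s, derivable_pt_lim G s ((fun s => 2 * qt s) s * G s)).
  { intros s. unfold G.
    eapply deriv_eqv; [|
    apply (dminus (fun s => Om (phi s) + Sp (phi s) ^ 2 + Sm (phi s) ^ 2 + Nm (phi s) ^ 2) (fun _ => 1));
    [|apply dconst];
    apply (dplus (fun s => Om (phi s) + Sp (phi s) ^ 2 + Sm (phi s) ^ 2));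
    [apply (dplus (fun s => Om (phi s) + Sp (phi s) ^ 2));
      [apply (dplus (fun s => Om (phi s))); [apply dOm|]|]|];
    simpl;
    (apply dmult; [|apply dmult; [|apply dconst]]);
    first [apply dSp|apply dSm|apply dNm|apply dSp|apply dSm|apply dNm]].
    unfold qt, qfun. ring. }
  assert (Hc : forall s, continuity_pt (fun s => 2 * qt s) s).
  { intros s. apply (cmult (fun _ => 2)); [apply cconst|apply cqt]. }
  destruct (lin_sign G _ HG Hc t) as [_ [Hz _]].
  destruct H0 as [Hc0 _]. unfold G in Hz. lra.
Qed.

Lemma Om_nonneg t : Om (phi t) >= 0.
Proof.
  assert (HG : forall s, derivable_pt_lim (fun s => Om (phi s)) s ((fun s => 2 * (qt s - qstar gamma)) s * Om (phi s))).
  { intros s. apply dOm. }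
  assert (Hc : forall s, continuity_pt (fun s => 2 * (qt s - qstar gamma)) s).
  { intros s. apply (cmult (fun _ => 2)); [apply cconst|]. apply (cminus qt); [apply cqt|apply cconst]. }
  destruct (lin_sign _ _ HG Hc t) as [_ [_ Hz]].
  destruct H0 as [_ [Hc0 _]]. lra.
Qed.

Lemma Mpos t : Nm (phi t) + Np (phi t) > 0.
Proof.
  set (G := fun s => Nm (phi s) + Np (phi s)).
  assert (HG : forall s, derivable_pt_lim G s ((fun s => qt s + 2 * Sp (phi s) + 2 * sqrt 3 * Sm (phi s)) s * G s)).
  { intros s. unfold G. eapply deriv_eqv; [|apply (dplus (fun s => Nm (phi s))); [apply dNm|apply dNp]]. ring. }
  assert (Hc : forall s, continuity_pt (fun s => qt s + 2 * Sp (phi s) + 2 * sqrt 3 * Sm (phi s)) s).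
  { intros s. apply (cplus (fun s => qt s + 2 * Sp (phi s))).
    apply (cplus qt); [apply cqt|apply (cmult (fun _ => 2)); [apply cconst|apply cSp]].
    apply (cmult (fun _ => 2 * sqrt 3)); [apply cconst|apply cSm]. }
  destruct (lin_sign G _ HG Hc t) as [Hz _].
  destruct H0 as [_ [_ Hc0]]. unfold G in Hz. apply Hz.
  assert (Rabs (Np (phi 0)) >= - Np (phi 0)) by (rewrite <- Rabs_Ropp; apply Rle_ge, Rle_abs). lra.
Qed.

Lemma Ppos t : Nm (phi t) - Np (phi t) > 0.
Proof.
  set (G := fun s => Nm (phi s) - Np (phi s)).
  assert (HG : forall s, derivable_pt_lim G s ((fun s => qt s + 2 * Sp (phi s) - 2 * sqrt 3 * Sm (phi s)) s * G s)).
  { intros s. unfold G. eapply deriv_eqv; [|apply (dminus (fun s => Nm (phi s))); [apply dNm|apply dNp]]. ring. }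
  assert (Hc : forall s, continuity_pt (fun s => qt s + 2 * Sp (phi s) - 2 * sqrt 3 * Sm (phi s)) s).
  { intros s. apply (cminus (fun s => qt s + 2 * Sp (phi s))).
    apply (cplus qt); [apply cqt|apply (cmult (fun _ => 2)); [apply cconst|apply cSp]].
    apply (cmult (fun _ => 2 * sqrt 3)); [apply cconst|apply cSm]. }
  destruct (lin_sign G _ HG Hc t) as [Hz _].
  destruct H0 as [_ [_ Hc0]]. unfold G in Hz. apply Hz.
  assert (Rabs (Np (phi 0)) >= Np (phi 0)) by (apply Rle_ge, Rle_abs). lra.
Qed.
End Inv.


Lemma r3_sq : sqrt 3 * sqrt 3 = 3.
Proof. apply sqrt_sqrt; lra. Qed.
Lemma r3_bounds : 1.7 < sqrt 3 < 1.8.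
Proof.
  assert (H := r3_sq). assert (0 <= sqrt 3) by apply sqrt_pos. split; nra.
Qed.

Lemma Rabs_le_between_stdlib (x c : R) : Rabs x <= c -> - c <= x <= c.
Proof. intros H. destruct (Rle_or_lt 0 x); [rewrite Rabs_right in H|rewrite Rabs_left in H]; lra. Qed.

Lemma abs_le_sq (x c : R) : 0 <= c -> x * x <= c * c -> Rabs x <= c.
Proof. intros Hc H. destruct (Rle_or_lt 0 x); [rewrite Rabs_right|rewrite Rabs_left]; nra. Qed.

Section Core.
Variables s1 s2 mm pp om : R -> R.
Variables k y1 y2 : R.
Let r3 := sqrt 3.
Definition qq t := 2 * (s1 t ^ 2 + s2 t ^ 2) + (2 - k) * om t.
Definition gg t := 2 - qq t.
Hypothesis Hd1 : forall t, derivable_pt_lim s1 t (gg t * s1 t + (mm t + pp t) ^ 2 / 2).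
Hypothesis Hd2 : forall t, derivable_pt_lim s2 t (gg t * s2 t + r3 * (mm t ^ 2 - pp t ^ 2) / 2).
Hypothesis HdM : forall t, derivable_pt_lim mm t (- (qq t + 2 * s1 t + 2 * r3 * s2 t) * mm t).
Hypothesis HdP : forall t, derivable_pt_lim pp t (- (qq t + 2 * s1 t - 2 * r3 * s2 t) * pp t).
Hypothesis HdO : forall t, derivable_pt_lim om t (- 2 * (qq t - (2 - k)) * om t).
Hypothesis Hcon : forall t, om t + s1 t ^ 2 + s2 t ^ 2 + (mm t + pp t) ^ 2 / 4 = 1.
Hypothesis Hom : forall t, 0 <= om t.
Hypothesis HM : forall t, 0 < mm t.
Hypothesis HP : forall t, 0 < pp t.
Hypothesis Hk : 0 < k < 2.
Hypothesis Hy : y1 ^ 2 + y2 ^ 2 = 1.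
Definition ell := - 1 - y1 - r3 * y2.
Hypothesis Hell : 0 < ell.

Definition d1 := y1 + 1.
Definition d2 := y2 + r3.
Definition A0 := d1 ^ 2 + d2 ^ 2.
Definition AA t := (s1 t + 1) * d1 + (s2 t + r3) * d2.
Definition BB t := - (s1 t + 1) * d2 + (s2 t + r3) * d1.
Definition rr t := BB t / AA t.
Definition WW t := om t + pp t.

Lemma r3sq : r3 * r3 = 3. Proof. apply r3_sq. Qed.
Lemma r3b : 1.7 < r3 < 1.8. Proof. apply r3_bounds. Qed.

Lemma ell_le1 : ell <= 1.
Proof.
  unfold ell. assert (H := r3sq). assert (H2 := r3b).
  assert ((y1 + r3 * y2) ^ 2 <= 4) by (assert (0 <= (r3 * y1 - y2)^2) by apply pow2_ge_0; nra). nra.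
Qed.

Lemma A0_eq : A0 = 3 - 2 * ell.
Proof. unfold A0, d1, d2, ell. assert (H := r3sq). nra. Qed.

Lemma pt_bounds t : s1 t ^ 2 + s2 t ^ 2 <= 1 /\ mm t + pp t <= 2 /\ om t <= 1
  /\ Rabs (s1 t) <= 1 /\ Rabs (s2 t) <= 1.
Proof.
  assert (H := Hcon t). assert (H1 := Hom t). assert (H2 := HM t). assert (H3 := HP t).
  assert (H4 := pow2_ge_0 (s1 t)). assert (H5 := pow2_ge_0 (s2 t)). assert (H6 := pow2_ge_0 (mm t + pp t)).
  split; [nra|]. split.
  { destruct (Rle_or_lt (mm t + pp t) 2); auto. nra. }
  split; [nra|]. split; apply abs_le_sq; nra.
Qed.

Lemma gg_eq t : gg t = k * om t + (mm t + pp t) ^ 2 / 2.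
Proof. unfold gg, qq. assert (H := Hcon t). nra. Qed.

Lemma gg_bounds t : 0 <= gg t <= 2.
Proof.
  assert (H := gg_eq t). assert (H1 := Hom t). split.
  - assert (H6 := pow2_ge_0 (mm t + pp t)). nra.
  - assert (H4 := pow2_ge_0 (s1 t)). assert (H5 := pow2_ge_0 (s2 t)). unfold gg, qq. nra.
Qed.

Lemma A_lower t : AA t >= 1/2.
Proof.
  destruct (pt_bounds t) as [Hs _].
  assert (H := r3sq). assert (Hb := r3b).
  set (c := y1 + r3 * y2).
  assert (HA0 : d1 ^ 2 + d2 ^ 2 = 5 + 2 * c) by (unfold d1, d2, c; nra).
  assert (Hc2 : c * c <= 4).
  { unfold c. assert (0 <= (r3 * y1 - y2)^2) by apply pow2_ge_0. nra. }
  assert (Hc : -2 <= c) by nra.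
  set (X := s1 t * d1 + s2 t * d2).
  assert (HX : X * X <= (s1 t ^ 2 + s2 t ^ 2) * (d1 ^ 2 + d2 ^ 2)).
  { unfold X. assert (0 <= (s1 t * d2 - s2 t * d1)^2) by apply pow2_ge_0. nra. }
  assert (HX2 : X * X <= 5 + 2 * c).
  { assert (0 <= d1 ^ 2 + d2 ^ 2) by (assert (H1 := pow2_ge_0 d1); assert (H2:=pow2_ge_0 d2); lra). nra. }
  assert (HAA : AA t = X + c + 4) by (unfold AA, X, c, d1, d2; nra).
  rewrite HAA. destruct (Rle_or_lt (-(3.5 + c)) X). lra.
  exfalso. assert (X * X > (3.5 + c) * (3.5 + c)) by nra. nra.
Qed.

Definition Ed t := k * om t * d1 + (r3 * k * om t + r3 * pp t * (mm t + pp t)) * d2.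
Definition Ep t := - k * om t * d2 + (r3 * k * om t + r3 * pp t * (mm t + pp t)) * d1.

Lemma dAA t : derivable_pt_lim AA t (gg t * AA t - Ed t).
Proof.
  unfold AA.
  eapply deriv_eqv; [|apply (dplus (fun t => (s1 t + 1) * d1) (fun t => (s2 t + r3) * d2));
    (apply dmult; [apply dplus; [auto|apply dconst]|apply dconst])].
  assert (H := gg_eq t). assert (H3 := r3sq). unfold Ed. 
  rewrite H. field.
Qed.

Lemma dBB t : derivable_pt_lim BB t (gg t * BB t - Ep t).
Proof.
  unfold BB.
  eapply deriv_eqv; [|apply (dplus (fun t => - (s1 t + 1) * d2) (fun t => (s2 t + r3) * d1));
    (apply dmult; [try apply (derivable_pt_lim_opp (fun t => s1 t + 1)); apply dplus; [auto|apply dconst]|apply dconst])].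
  assert (H := gg_eq t). unfold Ep. rewrite H. field.
Qed.

Lemma AA_pos t : AA t > 0.
Proof. assert (H := A_lower t). lra. Qed.

Lemma drr t : derivable_pt_lim rr t ((Ed t * BB t - Ep t * AA t) / (AA t) ^ 2).
Proof.
  unfold rr. eapply deriv_eqv; [|apply ddiv; [apply Rgt_not_eq, AA_pos|apply dBB|apply dAA]].
  assert (H := AA_pos t). field. lra.
Qed.

Definition mys := 1 + y1 - r3 * y2.

Definition dWv t := - 2 * (qq t - (2 - k)) * om t + - (qq t + 2 * s1 t - 2 * r3 * s2 t) * pp t.

Lemma dWW t : derivable_pt_lim WW t (dWv t).
Proof. unfold WW, dWv. apply dplus; auto. Qed.

Lemma Ed_bound t : Rabs (Ed t) <= 16 * WW t /\ Rabs (Ep t) <= 16 * WW t.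
Proof.
  assert (Hb := r3b). destruct (pt_bounds t) as [_ [Hmp [Ho _]]].
  assert (H1 := Hom t). assert (H2 := HM t). assert (H3 := HP t).
  assert (Hx1 : Rabs d1 <= 2).
  { unfold d1. apply Rabs_le. assert (y1 * y1 <= 1) by (assert (H5 := pow2_ge_0 y2); nra). nra. }
  assert (Hx2 : Rabs d2 <= 2.8).
  { unfold d2. apply Rabs_le. assert (y2 * y2 <= 1) by (assert (H5 := pow2_ge_0 y1); nra). nra. }
  set (e1 := k * om t). set (e2 := r3 * k * om t + r3 * pp t * (mm t + pp t)).
  assert (He1 : 0 <= e1 <= 2 * om t) by (unfold e1; nra).
  assert (He2 : 0 <= e2 <= 3.6 * om t + 3.6 * pp t).
  { unfold e2. split. assert (0 <= r3 * k * om t) by (apply Rmult_le_pos; [|lra]; nra).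
    assert (0 <= r3 * pp t * (mm t + pp t)) by (apply Rmult_le_pos; [|lra]; nra). lra.
    assert (r3 * k <= 3.6) by nra. assert (r3 * k * om t <= 3.6 * om t) by nra.
    assert (r3 * pp t * (mm t + pp t) <= 3.6 * pp t).
    { assert (r3 * (mm t + pp t) <= 3.6) by nra. nra. }
    lra. }
  unfold Ed, Ep, WW. fold e1 e2. split.
  - eapply Rle_trans; [apply Rabs_triang|]. rewrite !Rabs_mult.
    rewrite (Rabs_right e1), (Rabs_right e2); try lra.
    assert (Rabs d1 >= 0) by apply Rle_ge, Rabs_pos. assert (Rabs d2 >= 0) by apply Rle_ge, Rabs_pos. nra.
  - eapply Rle_trans; [apply Rabs_triang|].
    replace (- k * om t * d2) with (- (e1 * d2)) by (unfold e1; ring).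
    rewrite Rabs_Ropp, !Rabs_mult.
    rewrite (Rabs_right e1), (Rabs_right e2); try lra.
    assert (Rabs d1 >= 0) by apply Rle_ge, Rabs_pos. assert (Rabs d2 >= 0) by apply Rle_ge, Rabs_pos. nra.
Qed.

Lemma rr_deriv_bound t : Rabs (rr t) <= 1 ->
  Rabs ((Ed t * BB t - Ep t * AA t) / (AA t) ^ 2) <= 64 * WW t.
Proof.
  intros Hr. assert (HA := A_lower t). destruct (Ed_bound t) as [H1 H2].
  replace ((Ed t * BB t - Ep t * AA t) / (AA t) ^ 2) with ((Ed t * rr t - Ep t) / AA t)
    by (unfold rr; field; lra).
  unfold Rdiv. rewrite Rabs_mult. rewrite (Rabs_right (/ AA t)) by (apply Rle_ge, Rlt_le, Rinv_0_lt_compat; lra).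
  assert (Hinv : / AA t <= 2).
  { replace 2 with (/ (1/2)) by field. apply Rinv_le_contravar; lra. }
  assert (Rabs (Ed t * rr t - Ep t) <= 32 * WW t).
  { eapply Rle_trans; [apply Rabs_triang|]. rewrite Rabs_Ropp, Rabs_mult.
    assert (0 <= Rabs (rr t)) by apply Rabs_pos. assert (0 <= Rabs (Ed t)) by apply Rabs_pos. nra. }
  assert (0 <= Rabs (Ed t * rr t - Ep t)) by apply Rabs_pos.
  assert (0 < / AA t) by (apply Rinv_0_lt_compat; lra).
  nra.
Qed.

Lemma dW_bound t : dWv t <= 6 * WW t.
Proof.
  assert (Hb := r3b). destruct (pt_bounds t) as [_ [_ [_ [Hs1 Hs2]]]].
  assert (H1 := Hom t). assert (H3 := HP t). assert (Hg := gg_bounds t).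
  apply Rabs_le_between_stdlib in Hs1. apply Rabs_le_between_stdlib in Hs2.
  unfold dWv, WW. unfold gg in Hg.
  assert (-2 * (qq t - (2 - k)) * om t <= 4 * om t) by nra.
  assert (- (qq t + 2 * s1 t - 2 * r3 * s2 t) <= 6) by nra.
  nra.
Qed.

Lemma A0_ge1 : 1 <= A0.
Proof. rewrite A0_eq. assert (H := ell_le1). lra. Qed.

Lemma w_ident t :
  A0 * (s1 t - y1) = (AA t - A0) * d1 - BB t * d2 /\
  A0 * (s2 t - y2) = (AA t - A0) * d2 + BB t * d1.
Proof. unfold A0, AA, BB, d1, d2. split; ring. Qed.

Lemma geom t :
  A0 * (1 - s1 t ^ 2 - s2 t ^ 2) =
  2 * (AA t - A0) * ell - 2 * BB t * (y2 - r3 * y1) - (AA t - A0) ^ 2 - BB t ^ 2.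
Proof.
  destruct (w_ident t) as [E1 E2].
  set (e := AA t - A0) in *. set (b := BB t) in *.
  set (w1 := s1 t - y1) in *. set (w2 := s2 t - y2) in *.
  assert (Hyd : y1 * d1 + y2 * d2 = - ell) by (unfold d1, d2, ell; nra).
  assert (HA0 := A0_ge1).
  assert (Hyw : A0 * (y1 * w1 + y2 * w2) = - e * ell + b * (y2 - r3 * y1)).
  { replace (A0 * (y1 * w1 + y2 * w2)) with (y1 * (A0 * w1) + y2 * (A0 * w2)) by ring.
    rewrite E1, E2. unfold d1, d2 in *. nra. }
  assert (Hww : A0 * (A0 * (w1 ^ 2 + w2 ^ 2)) = A0 * (e ^ 2 + b ^ 2)).
  { replace (A0 * (A0 * (w1 ^ 2 + w2 ^ 2))) with ((A0 * w1) ^ 2 + (A0 * w2) ^ 2) by ring.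
    rewrite E1, E2. unfold A0. ring. }
  assert (Hww2 : A0 * (w1 ^ 2 + w2 ^ 2) = e ^ 2 + b ^ 2).
  { apply (Rmult_eq_reg_l A0); [exact Hww| lra]. }
  replace (s1 t) with (y1 + w1) by (unfold w1; ring).
  replace (s2 t) with (y2 + w2) by (unfold w2; ring).
  replace (A0 * (1 - (y1 + w1) ^ 2 - (y2 + w2) ^ 2)) with
     (A0 * (1 - y1^2 - y2^2) - 2 * (A0 * (y1 * w1 + y2 * w2)) - A0 * (w1 ^ 2 + w2 ^ 2)) by ring.
  rewrite Hyw, Hww2. replace (1 - y1 ^ 2 - y2 ^ 2) with 0 by lra. ring.
Qed.

Lemma y_bounds : Rabs y1 <= 1 /\ Rabs y2 <= 1.
Proof.
  assert (H1 := pow2_ge_0 y1). assert (H2 := pow2_ge_0 y2).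
  split; apply abs_le_sq; nra.
Qed.

Lemma d_le_A0 : Rabs d1 <= A0 /\ Rabs d2 <= A0.
Proof.
  assert (H := A0_ge1). assert (H1 := pow2_ge_0 d1). assert (H2 := pow2_ge_0 d2).
  split; apply abs_le_sq; unfold A0 in *; nra.
Qed.

Lemma region1 t eta1 b0 :
  0 <= eta1 -> 0 <= b0 -> AA t <= A0 + eta1 -> A0 + eta1 <= 3 -> Rabs (rr t) <= b0 ->
  Rabs (s1 t - y1) <= eta1 + 9 * b0 / ell + 3 * b0 /\
  Rabs (s2 t - y2) <= eta1 + 9 * b0 / ell + 3 * b0.
Proof.
  intros He1 Hb0 HA HA3 Hr.
  assert (HAp := AA_pos t). assert (HA0 := A0_ge1).
  assert (Hb : Rabs (BB t) <= 3 * b0).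
  { unfold rr in Hr. replace (BB t) with (BB t / AA t * AA t) by (field; lra).
    rewrite Rabs_mult, (Rabs_right (AA t)) by lra.
    assert (0 <= Rabs (BB t / AA t)) by apply Rabs_pos. nra. }
  assert (Hyy : Rabs (y2 - r3 * y1) <= 2.8).
  { destruct y_bounds as [Hy1 Hy2]. assert (Hb3 := r3b).
    eapply Rle_trans; [apply Rabs_triang|]. rewrite Rabs_Ropp, Rabs_mult, (Rabs_right r3) by lra. nra. }
  assert (He : Rabs (AA t - A0) <= eta1 + 9 * b0 / ell).
  { assert (Hg := geom t). destruct (pt_bounds t) as [Hs _].
    assert (H9 : 0 <= 9 * b0 / ell) by (apply Rmult_le_pos; [lra| apply Rlt_le, Rinv_0_lt_compat; lra]).
    destruct (Rle_or_lt 0 (AA t - A0)).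
    - rewrite Rabs_right; lra.
    - rewrite Rabs_left by lra.
      assert (HH : 2 * (AA t - A0) * ell - 2 * BB t * (y2 - r3 * y1) - (AA t - A0) ^ 2 - BB t ^ 2 >= 0).
      { rewrite <- Hg. apply Rle_ge, Rmult_le_pos; lra. }
      assert (Hbb : - 2 * BB t * (y2 - r3 * y1) <= 2 * 2.8 * (3 * b0)).
      { assert (Habs : Rabs (BB t * (y2 - r3 * y1)) <= 3 * b0 * 2.8).
        { rewrite Rabs_mult. apply Rmult_le_compat; auto using Rabs_pos. }
        apply Rabs_le_between_stdlib in Habs. lra. }
      assert (H1 := pow2_ge_0 (AA t - A0)). assert (H2 := pow2_ge_0 (BB t)).
      assert (- (AA t - A0) * ell <= 8.4 * b0) by lra.
      assert (- (AA t - A0) <= 8.4 * b0 / ell).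
      { apply (Rmult_le_reg_r ell); [lra|]. unfold Rdiv. rewrite Rmult_assoc, Rinv_l; lra. }
      assert (8.4 * b0 / ell <= 9 * b0 / ell).
      { unfold Rdiv. apply Rmult_le_compat_r; [apply Rlt_le, Rinv_0_lt_compat; lra| lra]. }
      lra. }
  destruct (w_ident t) as [E1 E2]. destruct d_le_A0 as [Hd1' Hd2'].
  assert (K : forall u v x w : R, Rabs u <= A0 -> Rabs v <= A0 ->
           A0 * x = (AA t - A0) * u + BB t * v -> Rabs x <= Rabs (AA t - A0) + Rabs (BB t)).
  { intros u v x w Hu Hv Hx.
    assert (Rabs (A0 * x) <= A0 * (Rabs (AA t - A0) + Rabs (BB t))).
    { rewrite Hx. eapply Rle_trans; [apply Rabs_triang|]. rewrite !Rabs_mult.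
      assert (H1 := Rabs_pos (AA t - A0)). assert (H2 := Rabs_pos (BB t)). nra. }
    rewrite Rabs_mult, (Rabs_right A0) in H by lra.
    apply (Rmult_le_reg_l A0); lra. }
  split.
  - assert (Rabs (s1 t - y1) <= Rabs (AA t - A0) + Rabs (BB t)).
    { apply (K d1 (- d2) _ 0); auto. rewrite Rabs_Ropp; auto. rewrite E1; ring. }
    lra.
  - assert (Rabs (s2 t - y2) <= Rabs (AA t - A0) + Rabs (BB t)).
    { apply (K d2 d1 _ 0); auto. }
    lra.
Qed.

Lemma near_y_rates t dl :
  Rabs (s1 t - y1) <= dl -> Rabs (s2 t - y2) <= dl -> 0 <= dl ->
  16 * dl <= k -> 14 * dl <= mys -> 6 * dl <= ell ->
  dWv t <= - k * om t - mys * pp t /\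
  - (qq t + 2 * s1 t + 2 * r3 * s2 t) >= ell.
Proof.
  intros H1 H2 Hd Hk1 Hm1 Hl1.
  apply Rabs_le_between_stdlib in H1. apply Rabs_le_between_stdlib in H2.
  destruct y_bounds as [Hy1 Hy2]. apply Rabs_le_between_stdlib in Hy1. apply Rabs_le_between_stdlib in Hy2.
  assert (Hb := r3b). assert (Ho := Hom t). assert (Hp := HP t).
  assert (Hg : gg t <= 8 * dl).
  { unfold gg, qq.
    set (w1 := s1 t - y1) in *. set (w2 := s2 t - y2) in *.
    replace (s1 t) with (y1 + w1) by (unfold w1; ring).
    replace (s2 t) with (y2 + w2) by (unfold w2; ring).
    assert (H3 := pow2_ge_0 w1). assert (H4 := pow2_ge_0 w2).
    assert (y1 * w1 >= - dl) by nra. assert (y2 * w2 >= - dl) by nra.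
    assert (0 <= (2 - k) * om t) by nra. nra. }
  unfold dWv. unfold mys, ell in *. split.
  - assert (E1 : -2 * (qq t - (2 - k)) * om t <= - k * om t).
    { assert (2 * (gg t - k) <= - k) by lra. unfold gg in H. nra. }
    assert (E2 : - (qq t + 2 * s1 t - 2 * r3 * s2 t) <= - (1 + y1 - r3 * y2)).
    { unfold gg in Hg. nra. }
    nra.
  - unfold gg in Hg. assert (H0 : 0 <= gg t) by apply gg_bounds. unfold gg in H0. nra.
Qed.

Lemma dMM t : derivable_pt_lim mm t (- (qq t + 2 * s1 t + 2 * r3 * s2 t) * mm t).
Proof. auto. Qed.

Lemma phase1 a b eta1 b0 c1 :
  0 <= eta1 -> 0 <= b0 -> b0 <= 1 -> A0 + eta1 <= 3 ->
  16 * (eta1 + 9 * b0 / ell + 3 * b0) <= k ->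
  14 * (eta1 + 9 * b0 / ell + 3 * b0) <= mys ->
  6 * (eta1 + 9 * b0 / ell + 3 * b0) <= ell ->
  0 < c1 -> c1 <= k -> c1 <= mys ->
  a <= b ->
  (forall t, a <= t <= b -> AA t <= A0 + eta1 /\ Rabs (rr t) <= b0) ->
  WW b <= WW a /\ Rabs (rr b) <= Rabs (rr a) + (64 / c1) * WW a /\
  mm a * exp (ell * (b - a)) <= mm b.
Proof.
  intros He Hb0 Hb1 HA3 C1 C2 C3 Hc1 Hc1k Hc1m Hab Hreg.
  assert (Hdl : 0 <= eta1 + 9 * b0 / ell + 3 * b0).
  { assert (0 <= 9 * b0 / ell) by (apply Rmult_le_pos; [lra| apply Rlt_le, Rinv_0_lt_compat; lra]). lra. }
  assert (Hrates : forall t, a <= t <= b ->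
     dWv t <= - k * om t - mys * pp t /\ - (qq t + 2 * s1 t + 2 * r3 * s2 t) >= ell).
  { intros t Ht. destruct (Hreg t Ht) as [HA Hr].
    destruct (region1 t eta1 b0 He Hb0 HA HA3 Hr) as [R1 R2].
    apply (near_y_rates t _ R1 R2); auto. }
  assert (HWd : forall t, a <= t <= b -> dWv t <= - c1 * WW t).
  { intros t Ht. destruct (Hrates t Ht) as [H _]. unfold WW.
    assert (H1 := Hom t). assert (H2 := HP t). nra. }
  split; [|split].
  - apply (deriv_nonpos WW dWv); auto. intros t Ht. apply dWW.
    intros t Ht. assert (H := HWd t Ht). assert (H1 := Hom t). assert (H2 := HP t). unfold WW in *. nra.
  - assert (Key : forall sg, sg * sg = 1 ->
      sg * rr b + 64 / c1 * WW b <= sg * rr a + 64 / c1 * WW a).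
    { intros sg Hsg.
      apply (deriv_nonpos (fun t => sg * rr t + 64 / c1 * WW t)
        (fun t => sg * ((Ed t * BB t - Ep t * AA t) / (AA t) ^ 2) + 64 / c1 * dWv t)); auto.
      - intros t Ht. apply (dplus (fun t => sg * rr t) (fun t => 64 / c1 * WW t)).
        + eapply deriv_eqv; [|apply (dmult (fun _ => sg) rr); [apply dconst|apply drr]]. ring.
        + eapply deriv_eqv; [|apply (dmult (fun _ => 64 / c1) WW); [apply dconst|apply dWW]]. ring.
      - intros t Ht. destruct (Hreg t Ht) as [_ Hr].
        assert (Hr1 : Rabs (rr t) <= 1) by lra.
        assert (Hb := rr_deriv_bound t Hr1).
        assert (Hsgb : Rabs (sg * ((Ed t * BB t - Ep t * AA t) / AA t ^ 2)) <= 64 * WW t).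
        { rewrite Rabs_mult. replace (Rabs sg) with 1. lra.
          assert (Hs0 : 0 <= Rabs sg) by apply Rabs_pos.
          assert (Rabs sg * Rabs sg = 1) by (rewrite <- Rabs_mult, Hsg; apply Rabs_R1). nra. }
        apply Rabs_le_between_stdlib in Hsgb.
        assert (H := HWd t Ht).
        assert (64 / c1 * dWv t <= 64 / c1 * (- c1 * WW t)).
        { apply Rmult_le_compat_l; auto. apply Rmult_le_pos; [lra| apply Rlt_le, Rinv_0_lt_compat; lra]. }
        replace (64 / c1 * (- c1 * WW t)) with (- 64 * WW t) in H0 by (field; lra).
        lra. }
    assert (K1 := Key 1 ltac:(ring)). assert (K2 := Key (-1) ltac:(ring)).
    assert (Hwb : 0 <= WW b) by (unfold WW; assert (H1 := Hom b); assert (H2 := HP b); lra).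
    assert (0 <= 64 / c1 * WW b) by (apply Rmult_le_pos; auto; apply Rmult_le_pos; [lra| apply Rlt_le, Rinv_0_lt_compat; lra]).
    unfold Rabs at 1. destruct (Rcase_abs (rr b)).
    + assert (- rr a <= Rabs (rr a)) by (rewrite <- Rabs_Ropp; apply Rle_abs). lra.
    + assert (rr a <= Rabs (rr a)) by apply Rle_abs. lra.
  - apply (exp_growth_ge mm (fun t => - (qq t + 2 * s1 t + 2 * r3 * s2 t) * mm t)); auto.
    intros t Ht. destruct (Hrates t Ht) as [_ H]. assert (H1 := HM t). nra.
Qed.

Lemma region2 t eta1 eta b0 :
  0 < eta1 -> 0 < eta -> 0 <= b0 -> b0 <= 1 -> b0 <= eta1 * eta / 240 ->
  A0 + eta1 / 2 <= AA t -> AA t <= 3 - eta -> Rabs (rr t) <= b0 ->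
  gg t >= k * (eta1 * eta / 12).
Proof.
  intros He1 He Hb0 Hb1 Hb2 HAl HAu Hr.
  assert (HAp := AA_pos t). assert (HA0 := A0_ge1).
  assert (Hb : Rabs (BB t) <= 3 * b0).
  { unfold rr in Hr. replace (BB t) with (BB t / AA t * AA t) by (field; lra).
    rewrite Rabs_mult, (Rabs_right (AA t)) by lra.
    assert (0 <= Rabs (BB t / AA t)) by apply Rabs_pos. nra. }
  assert (Hyy : Rabs (y2 - r3 * y1) <= 2.8).
  { destruct y_bounds as [Hy1 Hy2]. assert (Hb3 := r3b).
    eapply Rle_trans; [apply Rabs_triang|]. rewrite Rabs_Ropp, Rabs_mult, (Rabs_right r3) by lra. nra. }
  assert (Hg := geom t). assert (HA0e := A0_eq).
  assert (Hbb : - 2 * BB t * (y2 - r3 * y1) >= - (2 * 2.8 * (3 * b0))).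
  { assert (Habs : Rabs (BB t * (y2 - r3 * y1)) <= 3 * b0 * 2.8).
    { rewrite Rabs_mult. apply Rmult_le_compat; auto using Rabs_pos. }
    apply Rabs_le_between_stdlib in Habs. lra. }
  assert (Hb2' : BB t ^ 2 <= 9 * b0).
  { assert (Rabs (BB t) * Rabs (BB t) <= 3 * b0 * (3 * b0)) by (apply Rmult_le_compat; auto using Rabs_pos).
    rewrite <- Rabs_mult in H. replace (BB t ^ 2) with (BB t * BB t) by ring.
    assert (BB t * BB t <= Rabs (BB t * BB t)) by apply Rle_abs. nra. }
  assert (Hprod : (AA t - A0) * (2 * ell - (AA t - A0)) >= eta1 / 2 * eta).
  { assert (AA t - A0 >= eta1 / 2) by lra. assert (2 * ell - (AA t - A0) >= eta) by lra.
    apply Rle_ge, Rmult_le_compat; lra. }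
  assert (Hnum : A0 * (1 - s1 t ^ 2 - s2 t ^ 2) >= eta1 * eta / 4).
  { rewrite Hg. replace (2 * (AA t - A0) * ell - 2 * BB t * (y2 - r3 * y1) - (AA t - A0) ^ 2 - BB t ^ 2)
      with ((AA t - A0) * (2 * ell - (AA t - A0)) - 2 * BB t * (y2 - r3 * y1) - BB t ^ 2) by ring.
    lra. }
  assert (HS : 1 - s1 t ^ 2 - s2 t ^ 2 >= eta1 * eta / 12).
  { assert (A0 <= 3) by (assert (H := Hell); lra).
    assert (0 < eta1 * eta) by nra.
    destruct (Rle_or_lt (eta1 * eta / 12) (1 - s1 t ^ 2 - s2 t ^ 2)); [lra|].
    assert (A0 * (1 - s1 t ^ 2 - s2 t ^ 2) <= 3 * (eta1 * eta / 12)).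
    { destruct (Rle_or_lt 0 (1 - s1 t ^ 2 - s2 t ^ 2)); nra. }
    lra. }
  rewrite gg_eq. assert (H := Hcon t). assert (H1 := Hom t).
  assert (H2 := pow2_ge_0 (mm t + pp t)).
  assert (k * om t + (mm t + pp t) ^ 2 / 2 >= k * (1 - s1 t ^ 2 - s2 t ^ 2)) by nra.
  assert (k * (1 - s1 t ^ 2 - s2 t ^ 2) >= k * (eta1 * eta / 12)) by (apply Rle_ge, Rmult_le_compat_l; lra).
  lra.
Qed.

Lemma cAA t : continuity_pt AA t.
Proof. exact (deriv_cont _ _ _ (dAA t)). Qed.

Lemma phase2 a b eta1 eta b0 eE :
  0 < eta1 -> 0 < eta -> 0 <= b0 -> b0 <= 1 -> b0 <= eta1 * eta / 240 ->
  0 <= eE -> 16 * eE <= k * (eta1 * eta / 12) / 4 ->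
  a <= b -> A0 + eta1 <= AA a ->
  (forall t, a <= t <= b -> AA t <= 3 - eta /\ Rabs (rr t) <= b0 /\ WW t <= eE) ->
  (b - a) * (k * (eta1 * eta / 12) / 4) <= 3 /\
  WW b <= WW a * exp (6 * (b - a)) /\
  Rabs (rr b) <= Rabs (rr a) + 64 * (WW a * exp (6 * (b - a))) * (b - a).
Proof.
  intros He1 He Hb0 Hb1 Hb2 HeE HeE2 Hab HAa Hreg.
  set (gm := k * (eta1 * eta / 12)) in *.
  assert (Hgm : 0 < gm) by (unfold gm; apply Rmult_lt_0_compat; [lra| nra]).
  assert (Hspeed : forall t, a <= t <= b -> A0 + eta1 / 2 <= AA t -> gg t * AA t - Ed t >= gm / 4).
  { intros t Ht HA. destruct (Hreg t Ht) as [H1 [H2 H3]].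
    assert (Hg := region2 t eta1 eta b0 He1 He Hb0 Hb1 Hb2 HA H1 H2). fold gm in Hg.
    assert (HA2 := A_lower t). destruct (Ed_bound t) as [HE _].
    apply Rabs_le_between_stdlib in HE.
    assert (0 <= (gg t - gm) * AA t) by (apply Rmult_le_pos; lra).
    assert (0 <= gm * (AA t - 1/2)) by (apply Rmult_le_pos; lra).
    assert (E : gg t * AA t - gm / 2 = (gg t - gm) * AA t + gm * (AA t - 1/2)) by field.
    lra. }
  assert (Hlow : forall t, a <= t <= b -> A0 + eta1 / 2 <= AA t).
  { intros s Hs. destruct (Rle_or_lt (A0 + eta1 / 2) (AA s)) as [|Hlt]; auto. exfalso.
    assert (Has : a < s) by (destruct (Req_dec a s) as [<-|]; lra).
    destruct (first_hit (fun t => A0 + eta1 / 2 - AA t) a s) as [c [Hc1 [Hc2 Hc3]]]; auto.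
    - intros t. apply (cminus (fun _ => A0 + eta1 / 2)); [apply cconst|apply cAA].
    - simpl. lra.
    - simpl. lra.
    - simpl in Hc2, Hc3.
      assert (AA a <= AA c).
      { apply (deriv_nonneg AA (fun t => gg t * AA t - Ed t)); [lra| intros; apply dAA|].
        intros t Ht. destruct (Req_dec t c) as [->|Hne].
        + assert (Hs' := Hspeed c ltac:(lra) ltac:(lra)). lra.
        + assert (H := Hc3 t ltac:(lra)). assert (Hs' := Hspeed t ltac:(lra) ltac:(lra)). lra. }
      lra. }
  assert (Hinc : AA a + gm / 4 * (b - a) <= AA b).
  { set (F := fun t => AA t - gm / 4 * t).
    assert (F a <= F b).
    { apply (deriv_nonneg F (fun t => (gg t * AA t - Ed t) - gm / 4 * 1)); auto.
      - intros t Ht. unfold F. apply (dminus AA (fun t => gm / 4 * t)); [apply dAA|].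
        apply (dmult (fun _ => gm / 4) (fun t => t)) || idtac.
        eapply deriv_eqv; [|apply (dmult (fun _ => gm / 4) (fun t => t)); [apply dconst|apply did]]. ring.
      - intros t Ht. assert (H := Hspeed t Ht (Hlow t Ht)). lra. }
    unfold F in H. lra. }
  assert (HAb : AA b <= 3) by (destruct (Hreg b ltac:(lra)) as [H _]; lra).
  assert (HAa2 := A_lower a).
  assert (Hdur : (b - a) * (gm / 4) <= 3) by nra.
  assert (HWt : forall t, a <= t <= b -> WW t <= WW a * exp (6 * (t - a))).
  { intros t Ht. apply (exp_growth WW dWv); [lra| intros; apply dWW| intros; apply dW_bound]. }
  split; [exact Hdur|split; [apply HWt; lra|]].
  set (X := WW a * exp (6 * (b - a))).
  assert (HX : forall t, a <= t <= b -> WW t <= X).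
  { intros t Ht. eapply Rle_trans; [apply HWt; auto|]. unfold X.
    apply Rmult_le_compat_l. unfold WW; assert (H1 := Hom a); assert (H2 := HP a); lra.
    destruct (Req_dec t b) as [->|]; [lra|]. apply Rlt_le, exp_increasing. lra. }
  assert (Key : forall sg, sg * sg = 1 -> sg * rr b - 64 * X * b <= sg * rr a - 64 * X * a).
  { intros sg Hsg.
    apply (deriv_nonpos (fun t => sg * rr t - 64 * X * t)
        (fun t => sg * ((Ed t * BB t - Ep t * AA t) / (AA t) ^ 2) - 64 * X * 1)); auto.
    - intros t Ht. apply (dminus (fun t => sg * rr t) (fun t => 64 * X * t)).
      + eapply deriv_eqv; [|apply (dmult (fun _ => sg) rr); [apply dconst|apply drr]]. ring.
      + eapply deriv_eqv; [|apply (dmult (fun _ => 64 * X) (fun t => t)); [apply dconst|apply did]]. ring.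
    - intros t Ht. destruct (Hreg t Ht) as [_ [Hr _]].
      assert (Hr1 : Rabs (rr t) <= 1) by lra.
      assert (Hb := rr_deriv_bound t Hr1).
      assert (Hsgb : Rabs (sg * ((Ed t * BB t - Ep t * AA t) / AA t ^ 2)) <= 64 * WW t).
      { rewrite Rabs_mult. replace (Rabs sg) with 1. lra.
        assert (Hs0 : 0 <= Rabs sg) by apply Rabs_pos.
        assert (Rabs sg * Rabs sg = 1) by (rewrite <- Rabs_mult, Hsg; apply Rabs_R1). nra. }
      apply Rabs_le_between_stdlib in Hsgb. assert (H := HX t Ht). lra. }
  assert (K1 := Key 1 ltac:(ring)). assert (K2 := Key (-1) ltac:(ring)).
  unfold Rabs at 1. destruct (Rcase_abs (rr b)).
  + assert (- rr a <= Rabs (rr a)) by (rewrite <- Rabs_Ropp; apply Rle_abs). lra.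
  + assert (rr a <= Rabs (rr a)) by apply Rle_abs. lra.
Qed.

Lemma crr t : continuity_pt rr t.
Proof. exact (deriv_cont _ _ _ (drr t)). Qed.
Lemma cWW t : continuity_pt WW t.
Proof. exact (deriv_cont _ _ _ (dWW t)). Qed.

Section Boot.
Variables eta1 eta b0 eE c1 e0 : R.
Let dl := eta1 + 9 * b0 / ell + 3 * b0.
Let Tv := 3 / (k * (eta1 * eta / 12) / 4).
Hypothesis C_e1 : 0 < eta1.
Hypothesis C_e : 0 < eta.
Hypothesis C_b0 : 0 < b0 <= 1.
Hypothesis C_b0b : b0 <= eta1 * eta / 240.
Hypothesis C_A : A0 + eta1 <= 3 - eta.
Hypothesis C_dk : 16 * dl <= k.
Hypothesis C_dm : 14 * dl <= mys.
Hypothesis C_dl : 6 * dl <= ell.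
Hypothesis C_c1 : 0 < c1 /\ c1 <= k /\ c1 <= mys.
Hypothesis C_eE : 0 < eE /\ 16 * eE <= k * (eta1 * eta / 12) / 4.
Hypothesis C_e0 : 0 < e0.
Hypothesis C_e0a : 64 / c1 * e0 <= b0 / 4.
Hypothesis C_e0b : e0 * exp (6 * Tv) <= eE / 2.
Hypothesis C_e0c : 64 * (e0 * exp (6 * Tv)) * Tv <= b0 / 4.

Lemma Tv_pos : 0 < Tv.
Proof.
  unfold Tv. apply Rdiv_lt_0_compat; [lra|].
  apply Rdiv_lt_0_compat; [|lra]. apply Rmult_lt_0_compat; [lra|]. nra.
Qed.

Lemma W_nonneg t : 0 <= WW t.
Proof. unfold WW. assert (H1 := Hom t). assert (H2 := HP t). lra. Qed.

Lemma boot t0 T :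
  AA t0 < A0 + eta1 -> Rabs (rr t0) <= b0 / 4 -> WW t0 <= e0 -> t0 <= T ->
  (forall t, t0 <= t <= T -> AA t <= 3 - eta /\ Rabs (rr t) <= b0 /\ WW t <= eE) ->
  Rabs (rr T) <= 3 * b0 / 4 /\ WW T <= eE / 2 /\ T - t0 <= ln (2 / mm t0) / ell + Tv.
Proof.
  intros HA0 Hr0 HW0 HtT Hreg.
  assert (HTv := Tv_pos).
  assert (HE6 : 1 <= exp (6 * Tv)).
  { rewrite <- exp_0. destruct (Req_dec (6 * Tv) 0); [lra|]. apply Rlt_le, exp_increasing. lra. }
  assert (Hdl0 : 0 <= 9 * b0 / ell) by (apply Rmult_le_pos; [lra| apply Rlt_le, Rinv_0_lt_compat; lra]).
  assert (HA3 : A0 + eta1 <= 3) by lra.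
  assert (Hmm0 := HM t0).
  assert (Hc1W : 64 / c1 * WW t0 <= 64 / c1 * e0).
  { apply Rmult_le_compat_l; auto. apply Rmult_le_pos; [lra| apply Rlt_le, Rinv_0_lt_compat; lra]. }
  assert (Htime1 : forall t1, t0 <= t1 -> mm t0 * exp (ell * (t1 - t0)) <= mm t1 ->
            t1 - t0 <= ln (2 / mm t0) / ell).
  { intros t1 Ht1 Hg.
    destruct (pt_bounds t1) as [_ [Hm2 _]]. assert (Hp1 := HP t1).
    assert (Hex : exp (ell * (t1 - t0)) <= 2 / mm t0).
    { apply (Rmult_le_reg_l (mm t0)); auto. replace (mm t0 * (2 / mm t0)) with 2 by (field; lra). lra. }
    assert (ell * (t1 - t0) <= ln (2 / mm t0)).
    { rewrite <- (ln_exp (ell * (t1 - t0))). destruct (Req_dec (exp (ell * (t1 - t0))) (2 / mm t0)) as [E|E].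
      rewrite E; lra. apply Rlt_le, ln_increasing; [apply exp_pos|lra]. }
    apply (Rmult_le_reg_l ell); [lra|]. replace (ell * (ln (2 / mm t0) / ell)) with (ln (2 / mm t0)) by (field; lra).
    lra. }
  destruct (Classical_Prop.classic (exists s, t0 <= s <= T /\ A0 + eta1 <= AA s)) as [[s [Hs HAs]]|Hno].
  - destruct (first_hit (fun t => AA t - (A0 + eta1)) t0 s) as [t1 [Ht1 [Ht1a Ht1b]]].
    + intros t. apply (cminus AA (fun _ => _)); [apply cAA|apply cconst].
    + destruct (Req_dec t0 s) as [<-|]; lra.
    + simpl; lra.
    + simpl; lra.
    + simpl in Ht1a, Ht1b.
      destruct (phase1 t0 t1 eta1 b0 c1) as [P1 [P2 P3]]; try lra; try tauto.
      { intros t Ht. destruct (Hreg t ltac:(lra)) as [_ [Hr _]]. split; auto.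
        destruct (Req_dec t t1) as [->|]; [lra|]. assert (Hh := Ht1b t ltac:(lra)). lra. }
      destruct (phase2 t1 T eta1 eta b0 eE) as [Q1 [Q2 Q3]]; try lra; try tauto.
      { intros t Ht. apply Hreg. lra. }
      assert (HTt1 : T - t1 <= Tv).
      { unfold Tv. set (v := k * (eta1 * eta / 12) / 4) in *.
        assert (Hv : 0 < v) by (unfold v; apply Rdiv_lt_0_compat; [|lra]; apply Rmult_lt_0_compat; [lra|]; nra).
        apply (Rmult_le_reg_r v); auto. replace (3 / v * v) with 3 by (field; lra). lra. }
      assert (HexpT : exp (6 * (T - t1)) <= exp (6 * Tv)).
      { destruct (Req_dec (T - t1) Tv) as [->|]; [lra|]. apply Rlt_le, exp_increasing. lra. }
      assert (HW1 : WW t1 <= e0) by lra.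
      assert (HWexp : WW t1 * exp (6 * (T - t1)) <= e0 * exp (6 * Tv)).
      { apply Rmult_le_compat; auto using W_nonneg. apply Rlt_le, exp_pos. }
      assert (Hr1 : Rabs (rr t1) <= b0 / 2) by lra.
      split; [|split].
      * assert (64 * (WW t1 * exp (6 * (T - t1))) * (T - t1) <= 64 * (e0 * exp (6 * Tv)) * Tv).
        { apply Rmult_le_compat; try lra.
          assert (0 <= WW t1 * exp (6 * (T - t1))) by (apply Rmult_le_pos; [apply W_nonneg|apply Rlt_le, exp_pos]). lra. }
        lra.
      * lra.
      * assert (t1 - t0 <= ln (2 / mm t0) / ell) by (apply Htime1; lra). lra.
  - destruct (phase1 t0 T eta1 b0 c1) as [P1 [P2 P3]]; try lra; try tauto.
    { intros t Ht. destruct (Hreg t Ht) as [_ [Hr _]]. split; auto.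
      destruct (Rle_or_lt (AA t) (A0 + eta1)); auto. exfalso. apply Hno. exists t. split; auto; lra. }
    assert (e0 <= eE / 2) by nra.
    split; [lra|split; [lra|]].
    assert (T - t0 <= ln (2 / mm t0) / ell) by (apply Htime1; lra). lra.
Qed.

Lemma reach t0 :
  AA t0 < A0 + eta1 -> Rabs (rr t0) <= b0 / 4 -> WW t0 <= e0 ->
  exists ts, t0 <= ts /\ AA ts = 3 - eta /\ Rabs (rr ts) <= b0.
Proof.
  intros HA0 Hr0 HW0.
  set (F := fun t => mx (AA t - (3 - eta)) (mx (Rabs (rr t) - b0) (WW t - eE))).
  assert (HFc : forall t, continuity_pt F t).
  { intros t. unfold F. apply (cmx (fun t => AA t - (3 - eta))).
    apply (cminus AA (fun _ => _)); [apply cAA|apply cconst].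
    apply (cmx (fun t => Rabs (rr t) - b0)).
    apply (cminus (fun t => Rabs (rr t)) (fun _ => _)); [apply cabs, crr|apply cconst].
    apply (cminus WW (fun _ => _)); [apply cWW|apply cconst]. }
  assert (HFneg : forall t, F t <= 0 -> AA t <= 3 - eta /\ Rabs (rr t) <= b0 /\ WW t <= eE).
  { intros t Ht. unfold F in Ht.
    destruct (mx_props (AA t - (3 - eta)) (mx (Rabs (rr t) - b0) (WW t - eE))) as [M1 [M2 _]].
    destruct (mx_props (Rabs (rr t) - b0) (WW t - eE)) as [M3 [M4 _]]. lra. }
  assert (HF0 : F t0 < 0).
  { unfold F. destruct (mx_props (Rabs (rr t0) - b0) (WW t0 - eE)) as [_ [_ [E|E]]];
    destruct (mx_props (AA t0 - (3 - eta)) (mx (Rabs (rr t0) - b0) (WW t0 - eE))) as [_ [_ [E2|E2]]];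
    rewrite E2; try rewrite E; try lra.
    assert (e0 <= eE / 2).
    { assert (1 <= exp (6 * Tv)). { assert (H := Tv_pos). rewrite <- exp_0. destruct (Req_dec (6 * Tv) 0); [lra|].
        apply Rlt_le, exp_increasing. lra. }
      nra. }
    lra. }
  assert (Hex : exists T, t0 <= T /\ 0 <= F T).
  { destruct (Classical_Prop.classic (exists T, t0 <= T /\ 0 <= F T)) as [H|H]; auto. exfalso.
    set (T := t0 + (ln (2 / mm t0) / ell + Tv) + 1).
    assert (HTv := Tv_pos).
    assert (Hln : 0 <= ln (2 / mm t0) / ell).
    { destruct (pt_bounds t0) as [_ [Hm2 _]]. assert (Hp := HP t0). assert (Hm := HM t0).
      apply Rmult_le_pos; [|apply Rlt_le, Rinv_0_lt_compat; lra].
      rewrite <- ln_1. destruct (Req_dec 1 (2 / mm t0)) as [<-|]; [lra|].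
      apply Rlt_le, ln_increasing; [lra|].
      apply (Rmult_lt_reg_l (mm t0)); auto. replace (mm t0 * (2 / mm t0)) with 2 by (field; lra). lra. }
    destruct (boot t0 T) as [_ [_ B3]]; auto.
    - unfold T; lra.
    - intros t Ht. apply HFneg. destruct (Rle_or_lt (F t) 0); auto. exfalso; apply H.
      exists t; split; lra.
    - unfold T in B3. lra. }
  destruct Hex as [T [HT1 HT2]].
  destruct (first_hit F t0 T) as [ts [Hts1 [Hts2 Hts3]]]; auto.
  { destruct (Req_dec t0 T) as [<-|]; lra. }
  assert (Hreg : forall t, t0 <= t <= ts -> AA t <= 3 - eta /\ Rabs (rr t) <= b0 /\ WW t <= eE).
  { intros t Ht. apply HFneg. destruct (Req_dec t ts) as [->|]; [lra|].
    assert (Hh := Hts3 t ltac:(lra)). lra. }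
  destruct (boot t0 ts) as [B1 [B2 _]]; auto; try lra.
  exists ts. split; [lra|split; [|lra]].
  unfold F in Hts2.
  destruct (mx_props (Rabs (rr ts) - b0) (WW ts - eE)) as [_ [_ [E|E]]];
  destruct (mx_props (AA ts - (3 - eta)) (mx (Rabs (rr ts) - b0) (WW ts - eE))) as [_ [_ [E2|E2]]];
  rewrite E2 in Hts2; try rewrite E in Hts2; try lra.
Qed.
End Boot.

Lemma close_z t eta b0 :
  AA t = 3 - eta -> Rabs (rr t) <= b0 -> 0 <= eta ->
  Rabs (s1 t - (-1 + 3 * d1 / A0)) <= eta + 3 * b0 /\
  Rabs (s2 t - (- r3 + 3 * d2 / A0)) <= eta + 3 * b0.
Proof.
  intros HA Hr He.
  assert (HAp := AA_pos t). assert (HA0 := A0_ge1).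
  assert (Hb : Rabs (BB t) <= 3 * b0).
  { unfold rr in Hr. replace (BB t) with (BB t / AA t * AA t) by (field; lra).
    rewrite Rabs_mult, (Rabs_right (AA t)) by lra.
    assert (0 <= Rabs (BB t / AA t)) by apply Rabs_pos. nra. }
  destruct d_le_A0 as [Hd1' Hd2'].
  assert (K : forall u v x : R, Rabs u <= A0 -> Rabs v <= A0 ->
           A0 * x = (AA t - 3) * u + BB t * v -> Rabs x <= Rabs (AA t - 3) + Rabs (BB t)).
  { intros u v x Hu Hv Hx.
    assert (Rabs (A0 * x) <= A0 * (Rabs (AA t - 3) + Rabs (BB t))).
    { rewrite Hx. eapply Rle_trans; [apply Rabs_triang|]. rewrite !Rabs_mult.
      assert (H1 := Rabs_pos (AA t - 3)). assert (H2 := Rabs_pos (BB t)). nra. }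
    rewrite Rabs_mult, (Rabs_right A0) in H by lra.
    apply (Rmult_le_reg_l A0); lra. }
  assert (HA3 : Rabs (AA t - 3) = eta) by (rewrite HA; replace (3 - eta - 3) with (- eta) by ring; rewrite Rabs_Ropp, Rabs_right; lra).
  split.
  - assert (H := K d1 (- d2) (s1 t - (-1 + 3 * d1 / A0)) Hd1' ltac:(rewrite Rabs_Ropp; auto)).
    rewrite HA3 in H.
    assert (X : Rabs (s1 t - (-1 + 3 * d1 / A0)) <= eta + Rabs (BB t)).
    { apply H. unfold AA, BB, A0 in *. field. lra. }
    lra.
  - assert (H := K d2 d1 (s2 t - (- r3 + 3 * d2 / A0)) Hd2' Hd1').
    rewrite HA3 in H.
    assert (X : Rabs (s2 t - (- r3 + 3 * d2 / A0)) <= eta + Rabs (BB t)).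
    { apply H. unfold AA, BB, A0 in *. field. lra. }
    lra.
Qed.


Lemma mys_pos : 0 < mys.
Proof.
  unfold mys. unfold ell in Hell. destruct y_bounds as [Hy1 Hy2].
  apply Rabs_le_between_stdlib in Hy1. assert (Hb := r3b).
  assert (y2 < 0) by nra. nra.
Qed.

Lemma final_core :
  (forall dl T, 0 < dl -> exists t0, T <= t0 /\ Rabs (s1 t0 - y1) < dl /\
      Rabs (s2 t0 - y2) < dl /\ om t0 < dl /\ pp t0 < dl) ->
  forall eps T, 0 < eps -> exists ts, T <= ts /\
    Rabs (s1 ts - (-1 + 3 * d1 / A0)) <= eps /\
    Rabs (s2 ts - (- r3 + 3 * d2 / A0)) <= eps.
Proof.
  intros Hnear eps T Heps.
  assert (HL1 := ell_le1). assert (Hmy := mys_pos).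
  set (eta := Rmin eps ell / 4).
  assert (Heta : 0 < eta /\ eta <= eps / 4 /\ eta <= ell / 4).
  { unfold eta. assert (H1 := Rmin_l eps ell). assert (H2 := Rmin_r eps ell).
    assert (0 < Rmin eps ell) by (apply Rmin_glb_lt; lra). lra. }
  set (eta1 := Rmin k (Rmin mys ell) / 20).
  assert (Heta1 : 0 < eta1 /\ eta1 <= k / 20 /\ eta1 <= mys / 20 /\ eta1 <= ell / 20).
  { unfold eta1. assert (H1 := Rmin_l k (Rmin mys ell)). assert (H2 := Rmin_r k (Rmin mys ell)).
    assert (H3 := Rmin_l mys ell). assert (H4 := Rmin_r mys ell).
    assert (0 < Rmin k (Rmin mys ell)) by (apply Rmin_glb_lt; [lra|apply Rmin_glb_lt; lra]). lra. }
  set (b0 := eta1 * eta * ell / 240).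
  assert (Hb0 : 0 < b0 /\ b0 <= eta1 * eta / 240 /\ b0 <= eta / 2400 /\ 9 * b0 / ell + 3 * b0 <= 0.02 * eta1).
  { unfold b0. assert (0 < eta1 * eta) by nra. assert (0 < eta1 * eta * ell) by nra.
    split; [lra|]. split; [nra|]. split.
    - assert (eta1 * ell <= 1/10) by nra. nra.
    - replace (9 * (eta1 * eta * ell / 240) / ell) with (9 * eta1 * eta / 240) by (field; lra).
      assert (eta1 * eta * ell <= eta1 * eta) by nra. nra. }
  set (c1 := Rmin k mys).
  assert (Hc1 : 0 < c1 /\ c1 <= k /\ c1 <= mys).
  { unfold c1. assert (H1 := Rmin_l k mys). assert (H2 := Rmin_r k mys).
    assert (0 < Rmin k mys) by (apply Rmin_glb_lt; lra). lra. }
  set (v := k * (eta1 * eta / 12) / 4).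
  assert (Hv : 0 < v) by (unfold v; assert (0 < eta1 * eta) by nra; apply Rdiv_lt_0_compat; [|lra]; apply Rmult_lt_0_compat; lra).
  set (eE := v / 16).
  set (Tv := 3 / v).
  assert (HTv : 0 < Tv) by (unfold Tv; apply Rdiv_lt_0_compat; lra).
  set (E6 := exp (6 * Tv)).
  assert (HE6 : 0 < E6) by apply exp_pos.
  set (e0 := Rmin (b0 * c1 / 256) (Rmin (eE / 2 / E6) (b0 / (256 * E6 * Tv)))).
  assert (He0 : 0 < e0 /\ e0 <= b0 * c1 / 256 /\ e0 <= eE / 2 / E6 /\ e0 <= b0 / (256 * E6 * Tv)).
  { unfold e0. assert (H1 := Rmin_l (b0 * c1 / 256) (Rmin (eE / 2 / E6) (b0 / (256 * E6 * Tv)))).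
    assert (H2 := Rmin_r (b0 * c1 / 256) (Rmin (eE / 2 / E6) (b0 / (256 * E6 * Tv)))).
    assert (H3 := Rmin_l (eE / 2 / E6) (b0 / (256 * E6 * Tv))).
    assert (H4 := Rmin_r (eE / 2 / E6) (b0 / (256 * E6 * Tv))).
    assert (0 < b0 * c1 / 256) by (apply Rdiv_lt_0_compat; [nra|lra]).
    assert (0 < eE / 2 / E6) by (apply Rdiv_lt_0_compat; [apply Rdiv_lt_0_compat; [unfold eE; lra|lra]|lra]).
    assert (0 < b0 / (256 * E6 * Tv)) by (apply Rdiv_lt_0_compat; [lra|]; apply Rmult_lt_0_compat; [nra|lra]).
    assert (0 < Rmin (b0 * c1 / 256) (Rmin (eE / 2 / E6) (b0 / (256 * E6 * Tv)))).
    { apply Rmin_glb_lt; auto. apply Rmin_glb_lt; auto. }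
    lra. }
  set (dl0 := Rmin (Rmin (eta1 / 10) (b0 / 80)) (e0 / 4)).
  assert (Hdl0 : 0 < dl0 /\ dl0 <= eta1 / 10 /\ dl0 <= b0 / 80 /\ dl0 <= e0 / 4).
  { unfold dl0. assert (H1 := Rmin_l (Rmin (eta1 / 10) (b0 / 80)) (e0 / 4)).
    assert (H2 := Rmin_r (Rmin (eta1 / 10) (b0 / 80)) (e0 / 4)).
    assert (H3 := Rmin_l (eta1 / 10) (b0 / 80)). assert (H4 := Rmin_r (eta1 / 10) (b0 / 80)).
    assert (0 < Rmin (Rmin (eta1 / 10) (b0 / 80)) (e0 / 4)).
    { apply Rmin_glb_lt; [apply Rmin_glb_lt|]; lra. }
    lra. }
  destruct (Hnear dl0 T ltac:(lra)) as [t0 [Ht0 [N1 [N2 [N3 N4]]]]].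
  assert (HA0e := A0_eq).
  assert (Hx1 : Rabs d1 <= 2).
  { unfold d1. destruct y_bounds as [Hy1 _]. apply Rabs_le_between_stdlib in Hy1. apply Rabs_le; lra. }
  assert (Hx2 : Rabs d2 <= 2.8).
  { unfold d2. destruct y_bounds as [_ Hy2]. apply Rabs_le_between_stdlib in Hy2. assert (Hb := r3b). apply Rabs_le; lra. }
  assert (HAe : AA t0 - A0 = (s1 t0 - y1) * d1 + (s2 t0 - y2) * d2) by (unfold AA, A0, d1, d2; ring).
  assert (HBe : BB t0 = - (s1 t0 - y1) * d2 + (s2 t0 - y2) * d1) by (unfold BB, d1, d2; ring).
  assert (Hprod : forall u w, Rabs u < dl0 -> Rabs w <= 2.8 -> Rabs (u * w) <= 2.8 * dl0).
  { intros u w Hu Hw. rewrite Rabs_mult, (Rmult_comm 2.8). apply Rmult_le_compat; auto using Rabs_pos; lra. }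
  assert (HA1 : Rabs (AA t0 - A0) <= 5.6 * dl0).
  { rewrite HAe. eapply Rle_trans; [apply Rabs_triang|].
    assert (H1 := Hprod _ d1 N1 ltac:(lra)). assert (H2 := Hprod _ d2 N2 Hx2). lra. }
  assert (HB1 : Rabs (BB t0) <= 5.6 * dl0).
  { rewrite HBe. eapply Rle_trans; [apply Rabs_triang|].
    replace (- (s1 t0 - y1) * d2) with ((s1 t0 - y1) * (- d2)) by ring.
    assert (H1 := Hprod _ (- d2) N1 ltac:(rewrite Rabs_Ropp; lra)). assert (H2 := Hprod _ d1 N2 ltac:(lra)). lra. }
  assert (HAl := A_lower t0).
  assert (Hr0 : Rabs (rr t0) <= b0 / 4).
  { unfold rr. unfold Rdiv. rewrite Rabs_mult, Rabs_inv. rewrite (Rabs_right (AA t0)) by lra.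
    assert (/ AA t0 <= 2).
    { replace 2 with (/ (1/2)) by field. apply Rinv_le_contravar; lra. }
    assert (0 < / AA t0) by (apply Rinv_0_lt_compat; lra).
    assert (Hq0 := Rabs_pos (BB t0)). nra. }
  assert (HAt0 : AA t0 < A0 + eta1).
  { apply Rabs_le_between_stdlib in HA1. lra. }
  assert (HW0 : WW t0 <= e0) by (unfold WW; lra).
  assert (C_A : A0 + eta1 <= 3 - eta) by (rewrite HA0e; lra).
  assert (C_dk : 16 * (eta1 + 9 * b0 / ell + 3 * b0) <= k) by lra.
  assert (C_dm : 14 * (eta1 + 9 * b0 / ell + 3 * b0) <= mys) by lra.
  assert (C_dl : 6 * (eta1 + 9 * b0 / ell + 3 * b0) <= ell) by lra.
  assert (C_eE : 0 < eE /\ 16 * eE <= k * (eta1 * eta / 12) / 4) by (fold v; unfold eE; lra).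
  assert (C_e0b : e0 * exp (6 * (3 / (k * (eta1 * eta / 12) / 4))) <= eE / 2).
  { fold v Tv E6. assert (e0 * E6 <= eE / 2 / E6 * E6) by (apply Rmult_le_compat_r; lra).
    replace (eE / 2 / E6 * E6) with (eE / 2) in H by (field; lra). exact H. }
  assert (C_e0c : 64 * (e0 * exp (6 * (3 / (k * (eta1 * eta / 12) / 4)))) * (3 / (k * (eta1 * eta / 12) / 4)) <= b0 / 4).
  { fold v Tv E6. assert (e0 * E6 * Tv <= b0 / (256 * E6 * Tv) * E6 * Tv).
    { apply Rmult_le_compat_r; [lra|]. apply Rmult_le_compat_r; lra. }
    replace (b0 / (256 * E6 * Tv) * E6 * Tv) with (b0 / 256) in H by (field; lra). lra. }
  assert (C_e0a : 64 / c1 * e0 <= b0 / 4).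
  { assert (64 / c1 * e0 <= 64 / c1 * (b0 * c1 / 256)).
    { apply Rmult_le_compat_l; [|lra]. apply Rmult_le_pos; [lra| apply Rlt_le, Rinv_0_lt_compat; lra]. }
    replace (64 / c1 * (b0 * c1 / 256)) with (b0 / 4) in H by (field; lra). lra. }
  destruct (reach eta1 eta b0 eE c1 e0 ltac:(lra) ltac:(lra) ltac:(lra) ltac:(lra) C_A C_dk C_dm C_dl
     Hc1 C_eE ltac:(lra) C_e0a C_e0b C_e0c t0 HAt0 Hr0 HW0) as [ts [Hts1 [Hts2 Hts3]]].
  exists ts. split; [lra|].
  destruct (close_z ts eta b0 Hts2 Hts3 ltac:(lra)) as [Z1 Z2]. split; lra.
Qed.
End Core.


Lemma drev (f fd : R -> R) :
  (forall t, derivable_pt_lim f t (fd t)) ->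
  forall t, derivable_pt_lim (fun s => f (- s)) t (- fd (- t)).
Proof.
  intros H t.
  assert (H2 := derivable_pt_lim_comp (fun s => - s) f t (-1) (fd (- t))
     ltac:(apply (derivable_pt_lim_opp (fun s => s)); apply did) (H (- t))).
  unfold comp in H2. eapply deriv_eqv; [|exact H2]. ring.
Qed.

Lemma reduced gamma phi sg u1 u2 :
  2 / 3 < gamma < 2 -> is_solution gamma phi -> in_B1plus (phi 0) ->
  (sg = 1 \/ sg = -1) -> u1 ^ 2 + u2 ^ 2 = 1 -> 0 < ell u1 u2 ->
  (forall dl T, 0 < dl -> exists s, s <= T /\ Rabs (Sp (phi s) - u1) < dl /\
      Rabs (sg * Sm (phi s) - u2) < dl /\ Om (phi s) < dl /\ Nm (phi s) - sg * Np (phi s) < dl) ->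
  forall eps T, 0 < eps -> exists s, s <= T /\
    Rabs (Sp (phi s) - (-1 + 3 * d1 u1 / A0 u1 u2)) <= eps /\
    Rabs (sg * Sm (phi s) - (- sqrt 3 + 3 * d2 u2 / A0 u1 u2)) <= eps.
Proof.
  intros Hg Hsol H0 Hsg Hu Hell Hnear eps T Heps.
  set (s1 := fun t => Sp (phi (- t))).
  set (s2 := fun t => sg * Sm (phi (- t))).
  set (mm := fun t => Nm (phi (- t)) + sg * Np (phi (- t))).
  set (pp := fun t => Nm (phi (- t)) - sg * Np (phi (- t))).
  set (om := fun t => Om (phi (- t))).
  set (k := 2 - qstar gamma).
  assert (Hk : 0 < k < 2) by (unfold k, qstar; lra).
  assert (Hsg2 : sg * sg = 1) by (destruct Hsg as [-> | ->]; ring).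
  assert (Hq : forall t, qq s1 s2 om k t = qfun gamma (phi (- t))).
  { intros t. unfold qq, qfun, s1, s2, om, k. replace ((sg * Sm (phi (- t))) ^ 2) with (sg * sg * Sm (phi (- t)) ^ 2) by ring.
    rewrite Hsg2. ring. }
  assert (Hcons := constraint_all gamma phi Hsol H0).
  assert (Hcon : forall t, om t + s1 t ^ 2 + s2 t ^ 2 + (mm t + pp t) ^ 2 / 4 = 1).
  { intros t. unfold om, s1, s2, mm, pp. rewrite <- (Hcons (- t)).
    replace ((sg * Sm (phi (- t))) ^ 2) with (sg * sg * Sm (phi (- t)) ^ 2) by ring. rewrite Hsg2. field. }
  assert (Hgg : forall t, gg s1 s2 om k t = 2 - qfun gamma (phi (- t))).
  { intros t. unfold gg. rewrite Hq. ring. }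
  assert (Hr3 := r3_sq).
  set (r3 := sqrt 3) in *.
  destruct (final_core s1 s2 mm pp om k u1 u2) with (eps := eps) (T := - T) as [ts [Hts1 [Z1 Z2]]]; auto.
  - intros t. unfold s1. eapply deriv_eqv; [|apply (drev (fun s => Sp (phi s))); apply (dSp gamma phi Hsol)].
    rewrite Hgg. unfold qt, mm, pp, s1. field.
  - intros t. unfold s2. eapply deriv_eqv; [|apply (dmult (fun _ => sg) (fun t => Sm (phi (- t)))); [apply dconst|apply (drev (fun s => Sm (phi s))); apply (dSm gamma phi Hsol)]].
    rewrite Hgg. unfold qt, mm, pp. fold r3. destruct Hsg as [-> | ->]; field.
  - intros t. unfold mm. eapply deriv_eqv; [|apply (dplus (fun t => Nm (phi (- t))) (fun t => sg * Np (phi (- t))));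
      [apply (drev (fun s => Nm (phi s))); apply (dNm gamma phi Hsol)|
       apply (dmult (fun _ => sg) (fun t => Np (phi (- t)))); [apply dconst|apply (drev (fun s => Np (phi s))); apply (dNp gamma phi Hsol)]]].
    rewrite Hq. unfold qt, s1, s2. fold r3. destruct Hsg as [-> | ->]; ring.
  - intros t. unfold pp. eapply deriv_eqv; [|apply (dminus (fun t => Nm (phi (- t))) (fun t => sg * Np (phi (- t))));
      [apply (drev (fun s => Nm (phi s))); apply (dNm gamma phi Hsol)|
       apply (dmult (fun _ => sg) (fun t => Np (phi (- t)))); [apply dconst|apply (drev (fun s => Np (phi s))); apply (dNp gamma phi Hsol)]]].
    rewrite Hq. unfold qt, s1, s2. fold r3. destruct Hsg as [-> | ->]; ring.
  - intros t. unfold om. eapply deriv_eqv; [|apply (drev (fun s => Om (phi s))); apply (dOm gamma phi Hsol)].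
    rewrite Hq. unfold qt, k. ring.
  - intros t. unfold om. apply Rge_le, (Om_nonneg gamma phi Hsol H0).
  - intros t. unfold mm. destruct Hsg as [-> | ->].
    + replace (1 * Np (phi (- t))) with (Np (phi (- t))) by ring. apply (Mpos gamma phi Hsol H0).
    + replace (Nm (phi (- t)) + -1 * Np (phi (- t))) with (Nm (phi (- t)) - Np (phi (- t))) by ring. apply (Ppos gamma phi Hsol H0).
  - intros t. unfold pp. destruct Hsg as [-> | ->].
    + replace (Nm (phi (- t)) - 1 * Np (phi (- t))) with (Nm (phi (- t)) - Np (phi (- t))) by ring. apply (Ppos gamma phi Hsol H0).
    + replace (Nm (phi (- t)) - -1 * Np (phi (- t))) with (Nm (phi (- t)) + Np (phi (- t))) by ring. apply (Mpos gamma phi Hsol H0).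
  - intros dl T' Hdl. destruct (Hnear dl (- T') Hdl) as [s [Hs1 [N1 [N2 [N3 N4]]]]].
    exists (- s). unfold s1, s2, om, pp. rewrite Ropp_involutive. repeat split; auto; lra.
  - exists (- ts). split; [lra|]. unfold s1, s2 in Z1, Z2. split; auto.
Qed.


Lemma sq3 : sqrt 3 * sqrt 3 = 3. Proof. apply r3_sq. Qed.

Lemma K2_ell p : K2arc p -> on_circle p /\ 0 < ell (fst p) (snd p).
Proof.
  intros [Hc Hs]. split; auto. unfold side, T1, T3, T2, ell in *. simpl in *.
  assert (H := sq3). assert (Hb := r3_bounds).
  assert (E1 : (1/2 - -1) * (snd p - 0) - (- (sqrt 3 / 2) - 0) * (fst p - -1) = sqrt 3 / 2 * (1 + fst p + sqrt 3 * snd p)).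
  { field_simplify. rewrite ?H. field_simplify. replace (sqrt 3 ^ 2) with 3 by (simpl; lra). field. }
  assert (E2 : (1/2 - -1) * (sqrt 3 / 2 - 0) - (- (sqrt 3 / 2) - 0) * (1/2 - -1) = sqrt 3 / 2 * 3) by field.
  rewrite E1, E2 in Hs. nra.
Qed.

Lemma K3_ell p : K3arc p -> on_circle p /\ 0 < ell (fst p) (- snd p).
Proof.
  intros [Hc Hs]. split; auto. unfold side, T1, T3, T2, ell in *. simpl in *.
  assert (H := sq3). assert (Hb := r3_bounds).
  assert (E1 : (1/2 - -1) * (snd p - 0) - (sqrt 3 / 2 - 0) * (fst p - -1) = sqrt 3 / 2 * (sqrt 3 * snd p - 1 - fst p)).
  { field_simplify. replace (sqrt 3 ^ 2) with 3 by (simpl; lra). field. }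
  assert (E2 : (1/2 - -1) * (- (sqrt 3 / 2) - 0) - (sqrt 3 / 2 - 0) * (1/2 - -1) = - (sqrt 3 / 2 * 3)) by field.
  rewrite E1, E2 in Hs. nra.
Qed.

Lemma K1_x p : K1arc p -> 1/2 < fst p.
Proof.
  intros [Hc Hs]. unfold side, T1, T3, T2 in *. simpl in *.
  assert (Hb := r3_bounds).
  assert (E1 : (1/2 - 1/2) * (snd p - sqrt 3 / 2) - (- (sqrt 3 / 2) - sqrt 3 / 2) * (fst p - 1/2) = sqrt 3 * (fst p - 1/2)) by field.
  assert (E2 : (1/2 - 1/2) * (0 - sqrt 3 / 2) - (- (sqrt 3 / 2) - sqrt 3 / 2) * (-1 - 1/2) = - (sqrt 3 * (3/2))) by field.
  rewrite E1, E2 in Hs. nra.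
Qed.

Lemma good_excl u1 u2 : u1 ^ 2 + u2 ^ 2 = 1 -> 0 < ell u1 u2 ->
  u1 <= 1/2 /\ ell u1 (- u2) <= 0 /\ ell u1 u2 <> 0 /\ (u1, u2) <> T2 /\ ell u1 (- u2) <> - 3.
Proof.
  intros Hc Hl. unfold ell in *. assert (H := sq3). assert (Hb := r3_bounds).
  assert (H1 := pow2_ge_0 u1). assert (H2 := pow2_ge_0 u2).
  split; [|split; [|split; [lra|split]]].
  - destruct (Rle_or_lt u1 (1/2)); auto. exfalso.
    assert (sqrt 3 * u2 < -3/2) by lra. assert (u2 < 0) by nra.
    assert (3 * u2 ^ 2 > 9/4) by nra. nra.
  - assert (u1 ^ 2 <= 1) by lra. assert (-1 <= u1) by nra. lra.
  - intros E. unfold T2 in E. injection E as E1 E2. subst. nra.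
  - intros E. assert (u1 ^ 2 <= 1) by lra. assert (-1 <= u1) by nra. assert (u2 < 0) by nra.
    nra.
Qed.

Definition zst (u1 u2 : R) : pt := (-1 + 3 * d1 u1 / A0 u1 u2, - sqrt 3 + 3 * d2 u2 / A0 u1 u2).

Lemma A0_props u1 u2 : u1 ^ 2 + u2 ^ 2 = 1 -> 0 < ell u1 u2 ->
  A0 u1 u2 = 3 - 2 * ell u1 u2 /\ 1 <= A0 u1 u2.
Proof.
  intros Hc Hl. assert (E : A0 u1 u2 = 3 - 2 * ell u1 u2).
  { unfold A0, d1, d2, ell. assert (H := sq3). nra. }
  split; auto. rewrite E.
  assert (ell u1 u2 <= 1).
  { unfold ell. assert (H := sq3). assert (Hb := r3_bounds).
    assert (0 <= (sqrt 3 * u1 - u2)^2) by apply pow2_ge_0. assert ((u1 + sqrt 3 * u2) ^ 2 <= 4) by nra. nra. }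
  lra.
Qed.

Lemma zst_good u1 u2 : u1 ^ 2 + u2 ^ 2 = 1 -> 0 < ell u1 u2 ->
  on_circle (zst u1 u2) /\ on_line (u1, u2) C2 (zst u1 u2) /\ zst u1 u2 <> (u1, u2).
Proof.
  intros Hc Hl. destruct (A0_props u1 u2 Hc Hl) as [HA HA1].
  assert (H := sq3).
  set (l := ell u1 u2) in *.
  assert (Z1 : -1 + 3 * d1 u1 / A0 u1 u2 = u1 + 2 * l * d1 u1 / A0 u1 u2).
  { unfold d1 in *. rewrite HA. field. lra. }
  assert (Z2 : - sqrt 3 + 3 * d2 u2 / A0 u1 u2 = u2 + 2 * l * d2 u2 / A0 u1 u2).
  { unfold d2 in *. rewrite HA. field. lra. }
  assert (Hud : u1 * d1 u1 + u2 * d2 u2 = - l) by (unfold l, ell, d1, d2; nra).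
  assert (HAd : d1 u1 ^ 2 + d2 u2 ^ 2 = A0 u1 u2) by reflexivity.
  unfold zst, on_circle, on_line, side, C2. cbn [fst snd]. rewrite Z1, Z2.
  split; [|split].
  - set (c := 2 * l / A0 u1 u2).
    replace (u1 + 2 * l * d1 u1 / A0 u1 u2) with (u1 + c * d1 u1) by (unfold c; field; lra).
    replace (u2 + 2 * l * d2 u2 / A0 u1 u2) with (u2 + c * d2 u2) by (unfold c; field; lra).
    replace ((u1 + c * d1 u1) ^ 2 + (u2 + c * d2 u2) ^ 2) with
      ((u1 ^ 2 + u2 ^ 2) + 2 * c * (u1 * d1 u1 + u2 * d2 u2) + c * c * (d1 u1 ^ 2 + d2 u2 ^ 2)) by ring.
    rewrite Hc, Hud, HAd. unfold c. field. lra.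
  - unfold d1, d2. field. lra.
  - intros E. injection E as E1 E2.
    assert (2 * l * d1 u1 / A0 u1 u2 = 0) by lra.
    assert (2 * l * d2 u2 / A0 u1 u2 = 0) by lra.
    assert (Q1 : d1 u1 = 0).
    { apply (Rmult_eq_reg_l (2 * l / A0 u1 u2)). replace (2 * l / A0 u1 u2 * d1 u1) with (2 * l * d1 u1 / A0 u1 u2) by (field; lra). lra.
      apply Rgt_not_eq, Rdiv_lt_0_compat; lra. }
    assert (Q2 : d2 u2 = 0).
    { apply (Rmult_eq_reg_l (2 * l / A0 u1 u2)). replace (2 * l / A0 u1 u2 * d2 u2) with (2 * l * d2 u2 / A0 u1 u2) by (field; lra). lra.
      apply Rgt_not_eq, Rdiv_lt_0_compat; lra. }
    rewrite <- HAd in HA1. rewrite Q1, Q2 in HA1. lra.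
Qed.

Lemma zst_unique u1 u2 z : u1 ^ 2 + u2 ^ 2 = 1 -> 0 < ell u1 u2 ->
  on_circle z -> on_line (u1, u2) C2 z -> z <> (u1, u2) -> z = zst u1 u2.
Proof.
  intros Hc Hl Hz Hline Hne. destruct z as [z1 z2].
  destruct (A0_props u1 u2 Hc Hl) as [HA HA1].
  assert (H := sq3).
  set (l := ell u1 u2) in *.
  unfold on_circle, on_line, side, C2 in *. cbn [fst snd] in *.
  set (w1 := z1 - u1). set (w2 := z2 - u2).
  set (D1 := d1 u1). set (D2 := d2 u2).
  assert (Hcross : D2 * w1 - D1 * w2 = 0) by (unfold D1, D2, d1, d2, w1, w2; lra).
  set (lam := w1 * D1 + w2 * D2).
  assert (HAd : D1 ^ 2 + D2 ^ 2 = A0 u1 u2) by reflexivity.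
  assert (Ew1 : A0 u1 u2 * w1 = lam * D1).
  { rewrite <- HAd. unfold lam. replace ((D1 ^ 2 + D2 ^ 2) * w1) with ((w1 * D1 + w2 * D2) * D1 + (D2 * w1 - D1 * w2) * D2) by ring.
    rewrite Hcross. ring. }
  assert (Ew2 : A0 u1 u2 * w2 = lam * D2).
  { rewrite <- HAd. unfold lam. replace ((D1 ^ 2 + D2 ^ 2) * w2) with ((w1 * D1 + w2 * D2) * D2 - (D2 * w1 - D1 * w2) * D1) by ring.
    rewrite Hcross. ring. }
  assert (Hud : u1 * D1 + u2 * D2 = - l) by (unfold D1, D2, l, ell, d1, d2; nra).
  assert (Hcirc : 2 * (u1 * w1 + u2 * w2) + (w1 ^ 2 + w2 ^ 2) = 0).
  { unfold w1, w2. nra. }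
  assert (Hlam : lam * (2 * (- l) + lam) = 0).
  { assert (E : A0 u1 u2 * A0 u1 u2 * (2 * (u1 * w1 + u2 * w2) + (w1 ^ 2 + w2 ^ 2)) =
                A0 u1 u2 * (lam * (2 * (u1 * D1 + u2 * D2) + lam))).
    { replace (A0 u1 u2 * A0 u1 u2 * (2 * (u1 * w1 + u2 * w2) + (w1 ^ 2 + w2 ^ 2))) with
        (2 * A0 u1 u2 * (u1 * (A0 u1 u2 * w1) + u2 * (A0 u1 u2 * w2)) + ((A0 u1 u2 * w1) ^ 2 + (A0 u1 u2 * w2) ^ 2)) by ring.
      rewrite Ew1, Ew2. rewrite <- HAd. ring. }
    rewrite Hcirc, Hud in E. assert (A0 u1 u2 <> 0) by lra. nra. }
  assert (Hlam0 : lam <> 0).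
  { intros E0. apply Hne. rewrite E0 in Ew1, Ew2.
    assert (w1 = 0) by (apply (Rmult_eq_reg_l (A0 u1 u2)); lra).
    assert (w2 = 0) by (apply (Rmult_eq_reg_l (A0 u1 u2)); lra).
    unfold w1, w2 in *. f_equal; lra. }
  assert (Hl2 : lam = 2 * l).
  { destruct (Rmult_integral _ _ Hlam); [contradiction|lra]. }
  unfold zst. f_equal.
  - apply (Rmult_eq_reg_l (A0 u1 u2)); [|lra].
    replace z1 with (u1 + w1) by (unfold w1; ring).
    replace (A0 u1 u2 * (-1 + 3 * d1 u1 / A0 u1 u2)) with (- A0 u1 u2 + 3 * D1) by (unfold D1; field; lra).
    replace (A0 u1 u2 * (u1 + w1)) with (A0 u1 u2 * u1 + lam * D1) by (rewrite <- Ew1; ring).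
    rewrite Hl2, HA. unfold D1, d1, l. ring.
  - apply (Rmult_eq_reg_l (A0 u1 u2)); [|lra].
    replace z2 with (u2 + w2) by (unfold w2; ring).
    replace (A0 u1 u2 * (- sqrt 3 + 3 * d2 u2 / A0 u1 u2)) with (- sqrt 3 * A0 u1 u2 + 3 * D2) by (unfold D2; field; lra).
    replace (A0 u1 u2 * (u2 + w2)) with (A0 u1 u2 * u2 + lam * D2) by (rewrite <- Ew2; ring).
    rewrite Hl2, HA. unfold D2, d2, l, ell. ring_simplify. rewrite ?H. 
    replace (sqrt 3 ^ 2) with 3 by (simpl; lra). ring.
Qed.

Lemma ell_T1 : ell (-1) 0 = 0. Proof. unfold ell. ring. Qed.
Lemma ell_T2 : ell (1/2) (sqrt 3 / 2) = -3. Proof. unfold ell. assert (H := sq3). lra. Qed.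
Lemma ell_T3 : ell (1/2) (- (sqrt 3 / 2)) = 0. Proof. unfold ell. assert (H := sq3). lra. Qed.

Lemma case_K2 y1 y2 : K2arc (y1, y2) ->
  y1 ^ 2 + y2 ^ 2 = 1 /\ 0 < ell y1 y2 /\
  forall z, kasner_map_rel (y1, y2) z <-> z = zst y1 y2.
Proof.
  intros HK. destruct (K2_ell _ HK) as [Hc Hl]. cbn [fst snd] in *. unfold on_circle in Hc. cbn [fst snd] in Hc.
  destruct (good_excl y1 y2 Hc Hl) as [G1 [G2 _]].
  split; auto. split; auto. intros z. split.
  - intros [[E _]|[[E _]|[[E _]|[[H1 _]|[[_ [Hz [Hline Hne]]]|[H3 _]]]]]].
    + unfold T1 in E. injection E as -> ->. rewrite ell_T1 in Hl. lra.
    + unfold T2 in E. injection E as -> ->. rewrite ell_T2 in Hl. lra.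
    + unfold T3 in E. injection E as -> ->. rewrite ell_T3 in Hl. lra.
    + apply K1_x in H1. simpl in H1. lra.
    + apply zst_unique; auto.
    + destruct (K3_ell _ H3) as [_ H]. simpl in H. lra.
  - intros ->. right; right; right; right; left.
    destruct (zst_good y1 y2 Hc Hl) as [Z1 [Z2 Z3]]. auto.
Qed.

Definition refl (p : pt) : pt := (fst p, - snd p).

Lemma side_refl a b p : side (refl a) (refl b) (refl p) = - side a b p.
Proof. unfold side, refl. cbn [fst snd]. ring. Qed.

Lemma case_K3 y1 y2 : K3arc (y1, y2) ->
  y1 ^ 2 + (- y2) ^ 2 = 1 /\ 0 < ell y1 (- y2) /\
  forall z, kasner_map_rel (y1, y2) z <-> z = refl (zst y1 (- y2)).
Proof.
  intros HK. destruct (K3_ell _ HK) as [Hc Hl]. cbn [fst snd] in *. unfold on_circle in Hc. cbn [fst snd] in Hc.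
  assert (Hc' : y1 ^ 2 + (- y2) ^ 2 = 1) by (rewrite <- Hc; ring).
  destruct (good_excl y1 (- y2) Hc' Hl) as [G1 [G2 _]].
  replace (- - y2) with y2 in G2 by ring.
  split; auto. split; auto. intros z. split.
  - intros [[E _]|[[E _]|[[E _]|[[H1 _]|[[H2 _]|[_ [Hz [Hline Hne]]]]]]]].
    + unfold T1 in E. injection E as -> ->. replace (- 0) with 0 in Hl by ring. rewrite ell_T1 in Hl. lra.
    + unfold T2 in E. injection E as -> ->. rewrite ell_T3 in Hl. lra.
    + unfold T3 in E. injection E as -> ->. replace (- - (sqrt 3 / 2)) with (sqrt 3 / 2) in Hl by ring.
      rewrite ell_T2 in Hl. lra.
    + apply K1_x in H1. simpl in H1. lra.
    + destruct (K2_ell _ H2) as [_ H]. simpl in H. lra.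
    + assert (Hu : refl z = zst y1 (- y2)).
      { apply zst_unique; auto.
        - unfold on_circle, refl in *. cbn [fst snd] in *. rewrite <- Hz. ring.
        - unfold on_line in *. replace (y1, - y2) with (refl (y1, y2)) by reflexivity.
          replace C2 with (refl C3) by (unfold refl, C2, C3; cbn [fst snd]; f_equal; ring).
          rewrite side_refl, Hline. ring.
        - intros E. apply Hne. destruct z as [z1 z2]. unfold refl in E. cbn [fst snd] in E.
          injection E as E1 E2. f_equal; lra. }
      rewrite <- Hu. destruct z as [z1 z2]. unfold refl. cbn [fst snd]. f_equal. ring.
  - intros ->. right; right; right; right; right.
    destruct (zst_good y1 (- y2) Hc' Hl) as [Z1 [Z2 Z3]].
    split; auto. split; [|split].
    + unfold on_circle, refl in *. cbn [fst snd] in *. rewrite <- Z1. ring.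
    + unfold on_line in *.
      replace (y1, y2) with (refl (y1, - y2)) by (unfold refl; cbn [fst snd]; f_equal; ring).
      replace C3 with (refl C2) by (unfold refl, C2, C3; cbn [fst snd]; f_equal; ring).
      rewrite side_refl, Z2. ring.
    + intros E. apply Z3. destruct (zst y1 (- y2)) as [a b]. unfold refl in E. cbn [fst snd] in E.
      injection E as E1 E2. f_equal; lra.
Qed.

Lemma pt_bounds_circle a b o n : o + a ^ 2 + b ^ 2 + n ^ 2 = 1 -> 0 <= o ->
  Rabs a <= 1 /\ Rabs b <= 1.
Proof.
  intros H Ho. assert (H1 := pow2_ge_0 a). assert (H2 := pow2_ge_0 b). assert (H3 := pow2_ge_0 n).
  split; apply abs_le_sq; nra.
Qed.

Lemma un_rate (u : nat -> R) l : (forall n, Rabs (u n - l) <= / (INR n + 1)) -> Un_cv u l.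
Proof.
  intros H eps Heps. destruct (INR_archimed eps 1 Heps) as [N HN].
  exists N. intros n Hn. unfold R_dist.
  eapply Rle_lt_trans; [apply H|].
  assert (HnN : INR N <= INR n) by (apply le_INR; lia).
  assert (Hpos : 0 < INR n + 1) by (assert (H0 := pos_INR n); lra).
  apply (Rmult_lt_reg_l (INR n + 1)); auto.
  rewrite Rinv_r by lra. nra.
Qed.

Lemma reduced_to_alpha gamma phi sg y1 y2 :
  2 / 3 < gamma < 2 -> is_solution gamma phi -> in_B1plus (phi 0) ->
  (sg = 1 \/ sg = -1) -> y1 ^ 2 + (sg * y2) ^ 2 = 1 -> 0 < ell y1 (sg * y2) ->
  alpha_limit_point phi (kasner_state (y1, y2)) ->
  alpha_limit_point phi (kasner_state (fst (zst y1 (sg * y2)), sg * snd (zst y1 (sg * y2)))).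
Proof.
  intros Hg Hsol H0 Hsg Hc Hl [tau [Htau [C1 [C2' [C3 [C4 C5]]]]]].
  simpl in C1, C2', C3, C4, C5.
  assert (Hsg2 : sg * sg = 1) by (destruct Hsg as [-> | ->]; ring).
  assert (Habs : Rabs sg = 1) by (destruct Hsg as [-> | ->]; [apply Rabs_R1|rewrite Rabs_left; lra]).
  assert (Hnear : forall dl T, 0 < dl -> exists s, s <= T /\ Rabs (Sp (phi s) - y1) < dl /\
      Rabs (sg * Sm (phi s) - sg * y2) < dl /\ Om (phi s) < dl /\ Nm (phi s) - sg * Np (phi s) < dl).
  { intros dl T Hdl.
    destruct (Htau T) as [N0 HN0].
    destruct (C1 dl Hdl) as [N1 HN1]. destruct (C2' dl Hdl) as [N2 HN2].
    destruct (C3 (dl/2) ltac:(lra)) as [N3 HN3]. destruct (C4 (dl/2) ltac:(lra)) as [N4 HN4].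
    destruct (C5 dl Hdl) as [N5 HN5].
    set (N := (N0 + N1 + N2 + N3 + N4 + N5)%nat).
    exists (tau N). unfold R_dist in *.
    assert (A1 := HN1 N ltac:(unfold N; lia)). assert (A2 := HN2 N ltac:(unfold N; lia)).
    assert (A3 := HN3 N ltac:(unfold N; lia)). assert (A4 := HN4 N ltac:(unfold N; lia)).
    assert (A5 := HN5 N ltac:(unfold N; lia)). assert (A0' := HN0 N ltac:(unfold N; lia)).
    rewrite Rminus_0_r in A3, A4, A5.
    split; [lra|]. split; auto. split.
    - replace (sg * Sm (phi (tau N)) - sg * y2) with (sg * (Sm (phi (tau N)) - y2)) by ring.
      rewrite Rabs_mult, Habs. lra.
    - split.
      + apply Rabs_def2 in A5. lra.
      + apply Rabs_def2 in A3. apply Rabs_def2 in A4.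
        destruct Hsg as [-> | ->]; lra. }
  set (z1 := fst (zst y1 (sg * y2))). set (z2 := snd (zst y1 (sg * y2))).
  assert (Hred := reduced gamma phi sg y1 (sg * y2) Hg Hsol H0 Hsg Hc Hl Hnear).
  fold z1 z2 in Hred.
  assert (Hzc : z1 ^ 2 + (sg * z2) ^ 2 = 1).
  { destruct (zst_good y1 (sg * y2) Hc Hl) as [Z _]. unfold on_circle in Z.
    assert (E : (sg * z2) ^ 2 = z2 ^ 2).
    { replace ((sg * z2) ^ 2) with (sg * sg * z2 ^ 2) by ring. rewrite Hsg2. ring. }
    rewrite E. exact Z. }
  assert (Hpick : forall n : nat, exists s, s <= - INR n /\
     Rabs (Sp (phi s) - z1) <= / (4 * (INR n + 1) ^ 2) /\
     Rabs (sg * Sm (phi s) - z2) <= / (4 * (INR n + 1) ^ 2)).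
  { intros n. apply Hred. assert (H1 := pos_INR n).
    apply Rinv_0_lt_compat. nra. }
  set (tau' := fun n => proj1_sig (constructive_indefinite_description _ (Hpick n))).
  assert (Htau' : forall n, tau' n <= - INR n /\
     Rabs (Sp (phi (tau' n)) - z1) <= / (4 * (INR n + 1) ^ 2) /\
     Rabs (sg * Sm (phi (tau' n)) - z2) <= / (4 * (INR n + 1) ^ 2)).
  { intros n. unfold tau'. destruct (constructive_indefinite_description _ (Hpick n)) as [s Hs]. simpl. exact Hs. }
  assert (Hcons := constraint_all gamma phi Hsol H0).
  assert (Hbnd : forall n, Rabs (Sp (phi (tau' n)) - z1) <= / (INR n + 1) /\
      Rabs (Sm (phi (tau' n)) - sg * z2) <= / (INR n + 1) /\
      Rabs (Om (phi (tau' n)) - 0) <= / (INR n + 1) /\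
      Rabs (Nm (phi (tau' n)) - 0) <= / (INR n + 1) /\
      Rabs (Np (phi (tau' n)) - 0) <= / (INR n + 1)).
  { intros n. destruct (Htau' n) as [_ [B1 B2]].
    set (s := tau' n) in *.
    assert (Hn := pos_INR n).
    set (m := INR n + 1) in *.
    assert (Hm : 1 <= m) by (unfold m; lra).
    set (e := / (4 * m ^ 2)) in *.
    assert (He : 0 < e) by (unfold e; apply Rinv_0_lt_compat; nra).
    assert (He4 : 4 * e = / m ^ 2) by (unfold e; field; lra).
    assert (Hinv : / m ^ 2 <= / m).
    { apply Rinv_le_contravar; [lra|]. nra. }
    assert (He1 : e <= / m) by (assert (0 < / m ^ 2) by (apply Rinv_0_lt_compat; nra); lra).
    assert (B2' : Rabs (Sm (phi s) - sg * z2) <= e).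
    { replace (Sm (phi s) - sg * z2) with (sg * (sg * Sm (phi s) - z2)) by (destruct Hsg as [-> | ->]; ring).
      rewrite Rabs_mult, Habs. lra. }
    assert (Hc1 := Hcons s).
    assert (Hom := Om_nonneg gamma phi Hsol H0 s).
    assert (HM := Mpos gamma phi Hsol H0 s). assert (HP := Ppos gamma phi Hsol H0 s).
    destruct (pt_bounds_circle (Sp (phi s)) (Sm (phi s)) (Om (phi s)) (Nm (phi s)) Hc1 ltac:(lra)) as [S1 S2].
    assert (Hz1 : Rabs z1 <= 1) by (apply abs_le_sq; [lra|]; assert (H := pow2_ge_0 (sg * z2)); nra).
    assert (Hz2 : Rabs (sg * z2) <= 1) by (apply abs_le_sq; [lra|]; assert (H := pow2_ge_0 z1); nra).
    apply Rabs_le_between_stdlib in B1. apply Rabs_le_between_stdlib in B2'.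
    apply Rabs_le_between_stdlib in Hz1. apply Rabs_le_between_stdlib in Hz2.
    apply Rabs_le_between_stdlib in S1. apply Rabs_le_between_stdlib in S2.
    assert (Hdiff : Om (phi s) + Nm (phi s) ^ 2 <= 4 * e).
    { assert (E : Om (phi s) + Nm (phi s) ^ 2 = (z1 - Sp (phi s)) * (z1 + Sp (phi s)) + (sg * z2 - Sm (phi s)) * (sg * z2 + Sm (phi s))).
      { replace (Om (phi s) + Nm (phi s) ^ 2) with (1 - Sp (phi s) ^ 2 - Sm (phi s) ^ 2) by lra. rewrite <- Hzc. ring. }
      rewrite E. nra. }
    assert (HNm2 : Nm (phi s) ^ 2 <= / m ^ 2) by (assert (H := pow2_ge_0 (Nm (phi s))); lra).
    assert (HNm : Nm (phi s) <= / m).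
    { assert (0 < / m) by (apply Rinv_0_lt_compat; lra).
      destruct (Rle_or_lt (Nm (phi s)) (/ m)); auto.
      assert (/ m ^ 2 = / m * / m) by (field; lra). nra. }
    rewrite !Rminus_0_r.
    repeat split.
    - apply Rabs_le; lra.
    - apply Rabs_le; lra.
    - apply Rabs_le; assert (H := pow2_ge_0 (Nm (phi s))); lra.
    - apply Rabs_le; lra.
    - apply Rabs_le; lra. }
  exists tau'. simpl. repeat split.
  - intros M. destruct (INR_archimed 1 (- M) ltac:(lra)) as [N HN].
    exists N. intros n Hn. destruct (Htau' n) as [Ht _].
    assert (INR N <= INR n) by (apply le_INR; lia). lra.
  - apply un_rate. intros n; apply Hbnd.
  - apply un_rate. intros n; apply Hbnd.
  - apply un_rate. intros n; apply Hbnd.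
  - apply un_rate. intros n; apply Hbnd.
  - apply un_rate. intros n; apply Hbnd.
Qed.

Theorem mainTheorem2 :
  forall (gamma : R), 2 / 3 < gamma < 2 ->
  forall (phi : R -> state), is_solution gamma phi -> in_B1plus (phi 0) ->
  forall (y : pt), (K2arc y \/ K3arc y) ->
  alpha_limit_point phi (kasner_state y) ->
  (exists z : pt, kasner_map_rel y z) /\
  (forall z : pt, kasner_map_rel y z -> alpha_limit_point phi (kasner_state z)).
Proof.
  intros gamma Hg phi Hsol H0 y Hy Halpha.
  destruct y as [y1 y2].
  destruct Hy as [HK | HK].
  - destruct (case_K2 y1 y2 HK) as [Hc [Hl Hiff]].
    split; [exists (zst y1 y2); apply Hiff; reflexivity|].
    intros z Hz. apply Hiff in Hz. subst z.
    assert (Hc' : y1 ^ 2 + (1 * y2) ^ 2 = 1) by (replace (1 * y2) with y2 by ring; exact Hc).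
    assert (Hl' : 0 < ell y1 (1 * y2)) by (rewrite Rmult_1_l; auto).
    assert (H := reduced_to_alpha gamma phi 1 y1 y2 Hg Hsol H0 (or_introl eq_refl) Hc' Hl' Halpha).
    rewrite Rmult_1_l in H. destruct (zst y1 y2) as [a b]. cbn [fst snd] in H.
    rewrite Rmult_1_l in H. exact H.
  - destruct (case_K3 y1 y2 HK) as [Hc [Hl Hiff]].
    split; [exists (refl (zst y1 (- y2))); apply Hiff; reflexivity|].
    intros z Hz. apply Hiff in Hz. subst z.
    assert (Hc' : y1 ^ 2 + (-1 * y2) ^ 2 = 1) by (replace (-1 * y2) with (- y2) by ring; exact Hc).
    assert (Hl' : 0 < ell y1 (-1 * y2)) by (replace (-1 * y2) with (- y2) by ring; auto).
    assert (H := reduced_to_alpha gamma phi (-1) y1 y2 Hg Hsol H0 (or_intror eq_refl) Hc' Hl' Halpha).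
    replace (-1 * y2) with (- y2) in H by ring. destruct (zst y1 (- y2)) as [a b]. cbn [fst snd] in H.
    unfold refl. cbn [fst snd]. replace (- b) with (-1 * b) by ring. exact H.
Qed.
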